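(* Let $(S;A)$ be sanitized, let $(T;E) = \mathit{ker}(S;A)$, and let $\alpha = \exists x_1\ldots x_k.(t \bowtie u)$ with $\mathrm{bv}(\alpha) \cap (\mathrm{vars}(S) \cup \mathrm{vars}(A)) = \emptyset$. Suppose there is a substitution $\mu$ with $\mathrm{dom}(\mu) = \mathrm{bv}(\alpha)$ such that: 1. $T \vdash_{dy} \mu(x)$ for all $x \in \mathrm{dom}(\mu)$; 2. $\mathrm{pos}_x(r) \subseteq \mathbb{A}(T \cup \mathrm{dom}(\mu), r)$ for all $x \in \mathrm{dom}(\mu)$ and $r \in \{t,u\}$; 3. $(T;E) \vdash_{eq} \mu(t) \bowtie \mu(u)$. Then there is a substitution $\nu$ with $\mathrm{dom}(\nu) = \mathrm{bv}(\alpha)$ satisfying the same three conditions (with $\nu$ in place of $\mu$) which is $M$-bounded, i.e. $|\mathrm{st}(\nu(x))| \le M$ for every $x \in \mathrm{dom}(\nu)$, where $M = |\mathrm{st}(S) \cup \mathrm{st}(A \cup \{\alpha\})|$.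
   Context: $\mathrm{st}(\cdot)$ denotes the set of subterms of a term, or of the terms occurring in a set of terms or assertions. Terms. Fix names $\mathscr{N}$, variables $\mathscr{V}$ with quantification variables $\mathscr{V}_q \subseteq \mathscr{V}$, and keys $\mathscr{K} \subseteq \mathscr{N}$ with inverses. Terms: $t ::= x \mid m \mid (t,u) \mid \{t\}_k$ with $k \in \mathscr{K} \cup \mathscr{V}$. $X \vdash_{dy} t$ means derivable by the Dolev–Yao rules: ax ($t \in X$); fst/snd; pair; dec (from $\{t\}_k$ and $k^{-1}$ get $t$); enc. Positions. $\mathrm{Pos}(m) = \{\varepsilon\}$ for names and variables, and $\mathrm{Pos}(\mathsf{f}(t,u)) = \{\varepsilon\} \cup 0\,\mathrm{Pos}(t) \cup 1\,\mathrm{Pos}(u)$. $t|_p$ is the subterm at $p$, and $\mathrm{pos}_x(t) = \{p : t|_p = x\}$. With $\mathbb{Q}_p = \{\varepsilon\} \cup \{qi \in \mathrm{Pos}(t) : q \text{ a proper prefix of } p\}$, $\mathbb{A}(S,t) = \{p : S \vdash_{dy} t|_q \ \forall q \in \mathbb{Q}_p\}$. Assertions. An assertion is $\exists x_1\ldots x_k.(t \bowtie u)$ with $x_i \in \mathscr{V}_q$. Its positions are $0^k0p$ and $0^k1p$, and its abstractable positions w.r.t. $S$ are computed with $\mathbb{A}(S \cup \{x_1,\ldots,x_k\}, \cdot)$ on each side. $\mathrm{fv}$ and $\mathrm{bv}$ are free and bound variables; $\mathrm{pubs}(\alpha)$ is the set of maximal subterms of $\alpha$ without $\mathscr{V}_q$-variables.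 Proof rules for $S; A \vdash \alpha$: - ax; eq ($t \bowtie t$ if $S \vdash_{dy} t$); sym; - cons: from $t_0 \bowtie u_0$ and $t_1 \bowtie u_1$ get $\mathsf{f}(t_0,t_1) \bowtie \mathsf{f}(u_0,u_1)$; - $\mathsf{proj}_i$: the inverse of cons, allowed if $S \vdash_{dy} t_0, t_1, u_0, u_1$; - trans: from $t_1 \bowtie t_2, \ldots, t_k \bowtie t_{k+1}$ get $t_1 \bowtie t_{k+1}$; - $\exists$intro: from $\alpha[\mathrm{pos}_x(\alpha) \mapsto w]$ with $S \vdash_{dy} w$ and $\mathrm{pos}_x(\alpha) \subseteq \mathbb{A}(S \cup \{x\}, \alpha)$ get $\exists x.\alpha$; - $\exists$elim: from $\exists x.\alpha$ and $S \cup \{x\}; A \cup \{\alpha\} \vdash \gamma$ get $\gamma$, with $x$ not free in $S, A, \gamma$. $\vdash_{eq}$ denotes derivability without the two $\exists$ rules. Sanitized and kernel. $(S;A)$ is sanitized if $(\mathrm{vars}(S) \cup \mathrm{fv}(A)) \cap \mathscr{V}_q = \emptyset$ and $\mathrm{pubs}(\beta) \subseteq S$ for all $\beta \in A$. $\mathit{ker}(S;A) = (S \cup \mathrm{bv}(A);\ \{t \bowtie u : \exists\vec{x}.(t \bowtie u) \in A\})$. Standing assumptions: no variable occurs both free and bound in an assertion; the kernel $(T;E)$ is consistent, i.e. some ground substitution $\lambda$ has $\lambda(t) = \lambda(u)$ for all $t \bowtie u \in E$. *)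

(* Defs.v *)
(* Terms, Dolev-Yao derivability, positions, assertions and the
   equality proof system |-_eq of the paper, for a fixed signature given by
   - qv    : nat -> bool   (which variables are quantification variables V_q)
   - iskey : nat -> bool   (which names are keys, K subset N)
   - kinv  : nat -> nat    (inverse of a key name)                           *)
From Stdlib Require Import List Bool Arith.
Import ListNotations.

Inductive term : Type :=
| Var  : nat -> term
| Nm   : nat -> term
| Pair : term -> term -> term
| Enc  : term -> term -> term.  (* {t}_k, key at position 1 *)

Definition term_eq_dec : forall t u : term, {t = u} + {t <> u}.
Proof. decide equality; apply Nat.eq_dec. Defined.

Fixpoint vars (t : term) : list nat :=
  match t with
  | Var x => [x]
  | Nm _ => []
  | Pair a b | Enc a b => vars a ++ vars b
  end.

Fixpoint st (t : term) : list term :=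
  match t with
  | Var _ | Nm _ => [t]
  | Pair a b | Enc a b => t :: st a ++ st b
  end.

Definition card (l : list term) : nat := length (nodup term_eq_dec l).

Fixpoint app (s : nat -> term) (t : term) : term :=
  match t with
  | Var x => s x
  | Nm m => Nm m
  | Pair a b => Pair (app s a) (app s b)
  | Enc a b => Enc (app s a) (app s b)
  end.

Definition subst_on (dom : list nat) (s : nat -> term) : term -> term :=
  app (fun x => if in_dec Nat.eq_dec x dom then s x else Var x).

(* Positions: sequences over {0,1}. *)
Definition position := list nat.

Fixpoint subterm_at (t : term) (p : position) : option term :=
  match p with
  | [] => Some t
  | i :: p' =>
      match t with
      | Pair a b | Enc a b =>
          if Nat.eqb i 0 then subterm_at a p'
          else if Nat.eqb i 1 then subterm_at b p' else None
      | _ => None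
      end
  end.

Definition in_Pos (t : term) (p : position) : Prop := subterm_at t p <> None.

Definition in_pos_var (x : nat) (t : term) (p : position) : Prop :=
  subterm_at t p = Some (Var x).

Section Signature.
Variable qv : nat -> bool.
Variable iskey : nat -> bool.
Variable kinv : nat -> nat.

Definition is_key_term (k : term) : Prop :=
  match k with
  | Nm n => iskey n = true
  | Var _ => True
  | _ => False
  end.

Fixpoint wf (t : term) : Prop :=
  match t with
  | Var _ | Nm _ => True
  | Pair a b => wf a /\ wf b
  | Enc a k => wf a /\ is_key_term k
  end.

(* inverse of a key term; a variable used as a key is its own inverse *)
Definition key_inv (k : term) : option term :=
  match k with
  | Nm n => if iskey n then Some (Nm (kinv n)) else None
  | Var x => Some (Var x)
  | _ => None
  end.

Inductive dy (X : list term) : term -> Prop :=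
| dy_ax  : forall t, In t X -> dy X t
| dy_fst : forall t u, dy X (Pair t u) -> dy X t
| dy_snd : forall t u, dy X (Pair t u) -> dy X u
| dy_pair : forall t u, dy X t -> dy X u -> dy X (Pair t u)
| dy_dec : forall t k k', dy X (Enc t k) -> key_inv k = Some k' -> dy X k' -> dy X t
| dy_enc : forall t k, dy X t -> dy X k -> is_key_term k -> dy X (Enc t k).

Definition in_Q (t : term) (p q : position) : Prop :=
  q = [] \/
  (exists q' i r, q = q' ++ [i] /\ in_Pos t q /\ r <> [] /\ p = q' ++ r).

Definition abstractable (X : list term) (t : term) (p : position) : Prop :=
  in_Pos t p /\
  forall q s, in_Q t p q -> subterm_at t q = Some s -> dy X s.

Record assertion : Type := Asrt { bnd : list nat; lhs : term; rhs : term }.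

Definition avars (a : assertion) : list nat := bnd a ++ vars (lhs a) ++ vars (rhs a).
Definition fva (a : assertion) : list nat :=
  filter (fun x => negb (if in_dec Nat.eq_dec x (bnd a) then true else false))
         (vars (lhs a) ++ vars (rhs a)).
Definition sta (a : assertion) : list term := st (lhs a) ++ st (rhs a).

Definition has_qvar (t : term) : bool := existsb qv (vars t).

Fixpoint pubs_t (t : term) : list term :=
  if has_qvar t then
    match t with
    | Pair a b | Enc a b => pubs_t a ++ pubs_t b
    | _ => []
    end
  else [t].

Definition pubs (a : assertion) : list term := pubs_t (lhs a) ++ pubs_t (rhs a).

Definition wf_assertion (a : assertion) : Prop :=
  (forall x, In x (bnd a) -> qv x = true) /\
  wf (lhs a) /\ wf (rhs a) /\
  (forall x, In x (bnd a) -> ~ In x (fva a)).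

Definition sanitized (S : list term) (A : list assertion) : Prop :=
  (forall t x, In t S -> In x (vars t) -> qv x = false) /\
  (forall b x, In b A -> In x (fva b) -> qv x = false) /\
  (forall b s, In b A -> In s (pubs b) -> In s S).

Definition kerT (S : list term) (A : list assertion) : list term :=
  S ++ map Var (flat_map bnd A).
Definition kerE (A : list assertion) : list (term * term) :=
  map (fun b => (lhs b, rhs b)) A.

Definition ground (t : term) : Prop := vars t = [].

Definition consistent (E : list (term * term)) : Prop :=
  exists lam : nat -> term,
    (forall x, ground (lam x) /\ wf (lam x)) /\
    (forall t u, In (t, u) E -> wf (app lam t) /\ app lam t = app lam u).

(* S;E |-_eq t |><| u : the proof system without the two exists rules
   (E contains only quantifier-free assertions). Binary trans generates
   exactly the k-ary trans rule. *)
Inductive eqd (X : list term) (E : list (term * term)) : term -> term -> Prop :=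
| eqd_ax : forall t u, In (t, u) E -> eqd X E t u
| eqd_eq : forall t, dy X t -> eqd X E t t
| eqd_sym : forall t u, eqd X E t u -> eqd X E u t
| eqd_cons_pair : forall t0 t1 u0 u1,
    eqd X E t0 u0 -> eqd X E t1 u1 -> eqd X E (Pair t0 t1) (Pair u0 u1)
| eqd_cons_enc : forall t0 t1 u0 u1,
    eqd X E t0 u0 -> eqd X E t1 u1 -> eqd X E (Enc t0 t1) (Enc u0 u1)
| eqd_proj0_pair : forall t0 t1 u0 u1,
    eqd X E (Pair t0 t1) (Pair u0 u1) ->
    dy X t0 -> dy X t1 -> dy X u0 -> dy X u1 -> eqd X E t0 u0
| eqd_proj1_pair : forall t0 t1 u0 u1,
    eqd X E (Pair t0 t1) (Pair u0 u1) ->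
    dy X t0 -> dy X t1 -> dy X u0 -> dy X u1 -> eqd X E t1 u1
| eqd_proj0_enc : forall t0 t1 u0 u1,
    eqd X E (Enc t0 t1) (Enc u0 u1) ->
    dy X t0 -> dy X t1 -> dy X u0 -> dy X u1 -> eqd X E t0 u0
| eqd_proj1_enc : forall t0 t1 u0 u1,
    eqd X E (Enc t0 t1) (Enc u0 u1) ->
    dy X t0 -> dy X t1 -> dy X u0 -> dy X u1 -> eqd X E t1 u1
| eqd_trans : forall t1 t2 t3, eqd X E t1 t2 -> eqd X E t2 t3 -> eqd X E t1 t3.

(* The three conditions on a substitution sigma with dom(sigma) = bv(alpha),
   w.r.t. (T;E) = ker(S;A); sigma(x) and sigma(t), sigma(u) are (well-formed) terms. *)
Definition good_witness (S : list term) (A : list assertion) (alpha : assertion)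
  (sigma : nat -> term) : Prop :=
  let T := kerT S A in
  let E := kerE A in
  let dom := bnd alpha in
  (forall x, In x dom -> wf (sigma x)) /\
  wf (subst_on dom sigma (lhs alpha)) /\ wf (subst_on dom sigma (rhs alpha)) /\
  (forall x, In x dom -> dy T (sigma x)) /\
  (forall x r p, In x dom -> (r = lhs alpha \/ r = rhs alpha) ->
             in_pos_var x r p -> abstractable (T ++ map Var dom) r p) /\
  eqd T E (subst_on dom sigma (lhs alpha)) (subst_on dom sigma (rhs alpha)).

End Signature.

Definition bound_M (S : list term) (A : list assertion) (alpha : assertion) : nat :=
  card (flat_map st S ++ flat_map sta (A ++ [alpha])).

(* Main.v *)
Require Import Defs.
From Stdlib Require Import List Bool Arith Lia Classical ClassicalEpsilon.
Import ListNotations.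

Lemma st_refl : forall t, In t (st t).
Proof. destruct t; simpl; auto. Qed.

Lemma st_trans : forall a b c, In a (st b) -> In b (st c) -> In a (st c).
Proof.
  intros a b c Hab Hbc; induction c; simpl in *;
  try (destruct Hbc as [<-|[]]; simpl in Hab; exact Hab);
  (destruct Hbc as [<-|Hbc]; [exact Hab|];
   right; apply in_app_or in Hbc; apply in_or_app; destruct Hbc; [left; auto|right; auto]).
Qed.

Lemma vars_st : forall s t x, In s (st t) -> In x (vars s) -> In x (vars t).
Proof.
  intros s t x H Hx; induction t; simpl in *;
  try (destruct H as [<-|[]]; exact Hx);
  (destruct H as [<-|H]; [exact Hx|];
   apply in_app_or in H; apply in_or_app; destruct H; [left; auto|right; auto]).
Qed.

Lemma st_pair_l : forall a b, In a (st (Pair a b)).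
Proof. intros; simpl; right; apply in_or_app; left; apply st_refl. Qed.
Lemma st_pair_r : forall a b, In b (st (Pair a b)).
Proof. intros; simpl; right; apply in_or_app; right; apply st_refl. Qed.
Lemma st_enc_l : forall a b, In a (st (Enc a b)).
Proof. intros; simpl; right; apply in_or_app; left; apply st_refl. Qed.
Lemma st_enc_r : forall a b, In b (st (Enc a b)).
Proof. intros; simpl; right; apply in_or_app; right; apply st_refl. Qed.

Lemma app_st : forall (s : nat -> term) r' r, In r' (st r) -> In (Defs.app s r') (st (Defs.app s r)).
Proof.
  intros s r' r H; induction r; simpl in H.
  - destruct H as [<-|[]]; apply st_refl.
  - destruct H as [<-|[]]; apply st_refl.
  - destruct H as [<-|H]; [apply st_refl|]. simpl. right.
    apply in_app_or in H; apply in_or_app; destruct H; [left; auto|right; auto].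
  - destruct H as [<-|H]; [apply st_refl|]. simpl. right.
    apply in_app_or in H; apply in_or_app; destruct H; [left; auto|right; auto].
Qed.

Lemma subst_domfree : forall dom s r,
  (forall y, In y (vars r) -> ~ In y dom) -> subst_on dom s r = r.
Proof.
  intros dom s r H; unfold subst_on; induction r; simpl in *.
  - destruct (in_dec Nat.eq_dec n dom); [exfalso; eapply H; eauto|reflexivity].
  - reflexivity.
  - rewrite IHr1, IHr2; auto; intros y Hy; apply H; apply in_or_app; auto.
  - rewrite IHr1, IHr2; auto; intros y Hy; apply H; apply in_or_app; auto.
Qed.

Section Sig.
Variable iskey : nat -> bool.
Variable kinv : nat -> nat.

Lemma wf_st : forall t s, wf iskey t -> In s (st t) -> wf iskey s.
Proof.
  intros t s Hw H; induction t; simpl in *;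
  try (destruct H as [<-|[]]; exact I).
  - destruct H as [<-|H]; [exact Hw|]. destruct Hw.
    apply in_app_or in H; destruct H; auto.
  - destruct H as [<-|H]; [exact Hw|]. destruct Hw as [Hw1 Hk].
    apply in_app_or in H; destruct H; auto.
    destruct t2; simpl in *; try contradiction; destruct H as [<-|[]]; simpl; auto.
Qed.

Inductive dyA (X : list term) : term -> Prop :=
| A_ax : forall t, In t X -> dyA X t
| A_fst : forall t u, dyA X (Pair t u) -> dyA X t
| A_snd : forall t u, dyA X (Pair t u) -> dyA X u
| A_dec : forall t k k', dyA X (Enc t k) -> key_inv iskey kinv k = Some k' -> dyS X k' -> dyA X t
with dyS (X : list term) : term -> Prop :=
| S_A : forall t, dyA X t -> dyS X t
| S_pair : forall t u, dyS X t -> dyS X u -> dyS X (Pair t u)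
| S_enc : forall t k, dyS X t -> dyS X k -> is_key_term iskey k -> dyS X (Enc t k).

Scheme dyA_mut := Induction for dyA Sort Prop
with dyS_mut := Induction for dyS Sort Prop.

Lemma dyS_dy : forall X t, dyS X t -> dy iskey kinv X t.
Proof.
  intros X.
  apply (dyS_mut X (fun t _ => dy iskey kinv X t) (fun t _ => dy iskey kinv X t)); intros.
  - apply dy_ax; auto.
  - eapply dy_fst; eauto.
  - eapply dy_snd; eauto.
  - eapply dy_dec; eauto.
  - auto.
  - apply dy_pair; auto.
  - apply dy_enc; auto.
Qed.

Lemma dy_dyS : forall X t, dy iskey kinv X t -> dyS X t.
Proof.
  intros X t H; induction H.
  - apply S_A, A_ax; auto.
  - inversion IHdy; subst; try assumption; apply S_A; eapply A_fst; eauto.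
  - inversion IHdy; subst; try assumption; apply S_A; eapply A_snd; eauto.
  - apply S_pair; auto.
  - inversion IHdy1; subst; try assumption; apply S_A; eapply A_dec; eauto.
  - apply S_enc; auto.
Qed.

Lemma dyA_st : forall X t, dyA X t -> In t (flat_map st X).
Proof.
  intros X t H; induction H.
  - apply in_flat_map; exists t; split; auto; apply st_refl.
  - apply in_flat_map in IHdyA; destruct IHdyA as [x [Hx Hs]].
    apply in_flat_map; exists x; split; auto; eapply st_trans; eauto; apply st_pair_l.
  - apply in_flat_map in IHdyA; destruct IHdyA as [x [Hx Hs]].
    apply in_flat_map; exists x; split; auto; eapply st_trans; eauto; apply st_pair_r.
  - apply in_flat_map in IHdyA; destruct IHdyA as [x [Hx Hs]].
    apply in_flat_map; exists x; split; auto; eapply st_trans; eauto; apply st_enc_l.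
Qed.

Lemma dy_local : forall X s, dy iskey kinv X s ->
  In s (flat_map st X) \/
  (exists a b, s = Pair a b /\ dy iskey kinv X a /\ dy iskey kinv X b) \/
  (exists a b, s = Enc a b /\ dy iskey kinv X a /\ dy iskey kinv X b).
Proof.
  intros X s H; apply dy_dyS in H; inversion H; subst.
  - left; apply dyA_st; auto.
  - right; left; exists t, u; split; auto; split; apply dyS_dy; auto.
  - right; right; exists t, k; split; auto; split; apply dyS_dy; auto.
Qed.

Lemma dy_vars : forall X s x, dy iskey kinv X s -> In x (vars s) -> In x (flat_map vars X).
Proof.
  intros X s x H; induction H; intros Hx; simpl in *.
  - apply in_flat_map; eauto.
  - apply IHdy; apply in_or_app; auto.
  - apply IHdy; apply in_or_app; auto.
  - apply in_app_or in Hx; destruct Hx; auto.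
  - apply IHdy1; apply in_or_app; auto.
  - apply in_app_or in Hx; destruct Hx; auto.
Qed.

Lemma dy_nil : forall s, dy iskey kinv [] s -> False.
Proof. intros s H; induction H; auto. Qed.

Section Strength.
Variable T : list term.
Variable dom : list nat.
Hypothesis Hdisj : forall y, In y dom -> ~ In y (flat_map vars T).

Definition domfree (dom : list nat) (t : term) := forall y, In y (vars t) -> ~ In y dom.

Lemma strength_S : forall t, dyS (T ++ map Var dom) t -> domfree dom t -> dyS T t.
Proof.
  refine (dyS_mut (T ++ map Var dom)
     (fun t _ => (exists x, In x dom /\ t = Var x) \/ dyA T t)
     (fun t _ => domfree dom t -> dyS T t) _ _ _ _ _ _ _); intros.
  - apply in_app_or in i; destruct i as [H|H].
    + right; apply A_ax; auto.
    + left; apply in_map_iff in H; destruct H as [x [<- Hx]]; eauto.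
  - destruct H as [[x [_ Hx]]|Hx]; [discriminate|]. right; eapply A_fst; eauto.
  - destruct H as [[x [_ Hx]]|Hx]; [discriminate|]. right; eapply A_snd; eauto.
  - destruct H as [[x [_ Hx]]|Hx]; [discriminate|]. right; eapply A_dec; eauto.
    apply H0. apply dyA_st in Hx.
    intros y Hy Hyd. apply (Hdisj y Hyd).
    apply in_flat_map in Hx; destruct Hx as [s [Hs Hst]].
    apply in_flat_map; exists s; split; auto.
    eapply vars_st; eauto. simpl. apply in_or_app; right.
    destruct k; simpl in e; try discriminate.
    + injection e; intros <-; exact Hy.
    + destruct (iskey n); try discriminate. injection e; intros <-; destruct Hy.
  - destruct H as [[x [Hx ->]]|Hx].
    + exfalso; apply (H0 x); simpl; auto.
    + apply S_A; auto.
  - apply S_pair; [apply H|apply H0]; intros y Hy; apply H1; simpl; apply in_or_app; auto.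
  - apply S_enc; auto; [apply H|apply H0]; intros y Hy; apply H1; simpl; apply in_or_app; auto.
Qed.

Lemma dy_strength : forall t, dy iskey kinv (T ++ map Var dom) t -> domfree dom t -> dy iskey kinv T t.
Proof.
  intros t H Hf; apply dyS_dy; apply strength_S; auto; apply dy_dyS; auto.
Qed.
End Strength.
End Sig.
Section Model.
Variable iskey : nat -> bool.
Variable kinv : nat -> nat.
Variable X : list term.
Variable E : list (term * term).
Variable Ulist : list term.
Variable lam : nat -> term.
Hypothesis HUcl : forall s s', In s Ulist -> In s' (st s) -> In s' Ulist.
Hypothesis HUwf : forall s, In s Ulist -> wf iskey s.
Hypothesis HE : forall a b, In (a,b) E ->
  In a Ulist /\ In b Ulist /\ dy iskey kinv X a /\ dy iskey kinv X b.
Hypothesis Hlam : forall a b, In (a,b) E -> Defs.app lam a = Defs.app lam b.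
Hypothesis HXU : forall s, In s X -> In s Ulist \/ (exists n, s = Var n) \/ (exists n, s = Nm n).

Local Notation DY := (dy iskey kinv X).
Local Notation EQ := (eqd iskey kinv X E).

Lemma eqd_lam : forall a b, EQ a b -> Defs.app lam a = Defs.app lam b.
Proof.
  intros a b H; induction H; simpl in *; auto; try congruence.
Qed.

Fixpoint constr (s : term) : Prop :=
  DY s \/ match s with Pair a b | Enc a b => constr a /\ constr b | _ => False end.

Lemma eqd_constr : forall a b, EQ a b -> constr a /\ constr b.
Proof.
  intros a b H; induction H; simpl in *.
  - destruct (HE _ _ H) as [_ [_ [? ?]]]; destruct t; destruct u; simpl; auto.
  - destruct t; simpl; auto.
  - tauto.
  - tauto.
  - tauto.
  - destruct t0; destruct u0; simpl; auto.
  - destruct t1; destruct u1; simpl; auto.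
  - destruct t0; destruct u0; simpl; auto.
  - destruct t1; destruct u1; simpl; auto.
  - tauto.
Qed.

Lemma wf_constr_dy : forall s, wf iskey s -> constr s -> DY s.
Proof.
  induction s; simpl; intros Hw Hc; try (destruct Hc as [Hc|[]]; exact Hc).
  - destruct Hc as [Hc|[H1 H2]]; auto. destruct Hw; apply dy_pair; auto.
  - destruct Hc as [Hc|[H1 H2]]; auto. destruct Hw as [Hw Hk]; apply dy_enc; auto.
    apply IHs2; auto; destruct s2; simpl in *; auto; contradiction.
Qed.

Definition dec (P : Prop) : bool := if excluded_middle_informative P then true else false.
Lemma dec_true : forall P, dec P = true <-> P.
Proof. intros P; unfold dec; destruct (excluded_middle_informative P); split; auto; discriminate + contradiction. Qed.
Lemma dec_false : forall P, dec P = false <-> ~ P.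
Proof. intros P; unfold dec; destruct (excluded_middle_informative P); split; auto; try discriminate; intros; contradiction. Qed.
Lemma dec_iff : forall P Q, (P <-> Q) -> dec P = dec Q.
Proof.
  intros P Q H; unfold dec; destruct (excluded_middle_informative P); destruct (excluded_middle_informative Q); tauto.
Qed.

Lemma find_ext' : forall (A : Type) (f g : A -> bool) l, (forall x, f x = g x) -> find f l = find g l.
Proof. induction l; simpl; intros; auto. rewrite H; destruct (g a); auto. Qed.

Lemma find_exists : forall (A : Type) (f : A -> bool) l x, In x l -> f x = true -> exists y, find f l = Some y.
Proof.
  intros A f l x Hx Hf; destruct (find f l) eqn:Hfd; eauto.
  exfalso; eapply find_none in Hfd; eauto; congruence.
Qed.

Definition Blist := filter (fun s => dec (DY s)) Ulist.
Lemma inB : forall s, In s Blist <-> In s Ulist /\ DY s.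
Proof. intros s; unfold Blist; rewrite filter_In, dec_true; tauto. Qed.

Definition rep (s : term) : term :=
  match find (fun b => dec (EQ s b)) Blist with Some b => b | None => Nm 0 end.
Definition isPair (b : term) : bool := match b with Pair _ _ => true | _ => false end.
Definition isEncD (b : term) : bool :=
  match b with Enc c0 c1 => dec (DY c0) && dec (DY c1) | _ => false end.
Definition findP s := find (fun b => dec (EQ s b) && isPair b) Blist.
Definition findE s := find (fun b => dec (EQ s b) && isEncD b) Blist.

Inductive val : Type :=
| vleaf : term -> val
| vatom : term -> val
| vpair : val -> val -> val
| venc : val -> val -> val.

Definition val_eq_dec : forall v w : val, {v = w} + {v <> w}.
Proof. decide equality; apply term_eq_dec. Defined.

Fixpoint tsize (t : term) : nat :=
  match t with Pair a b | Enc a b => S (tsize a + tsize b) | _ => 1 end.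
Lemma tsize_pos : forall t, 1 <= tsize t.
Proof. destruct t; simpl; lia. Qed.

Definition sz (s : term) := tsize (Defs.app lam s).

Fixpoint IBf (n : nat) (s : term) : val :=
  match n with
  | 0 => vatom (rep s)
  | S n' =>
    match findP s with
    | Some (Pair c0 c1) => vpair (IBf n' c0) (IBf n' c1)
    | _ => match findE s with
           | Some (Enc c0 c1) => venc (IBf n' c0) (IBf n' c1)
           | _ => vatom (rep s)
           end
    end
  end.

Definition IB (s : term) := IBf (sz s) s.

Fixpoint Imod (s : term) : val :=
  if in_dec term_eq_dec s Blist then IB s else
  match s with
  | Pair a b => vpair (Imod a) (Imod b)
  | Enc a b => venc (Imod a) (Imod b)
  | _ => vleaf s
  end.

Lemma I_B : forall s, In s Blist -> Imod s = IB s.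
Proof. intros s H; destruct s; simpl; destruct (in_dec term_eq_dec _ Blist); tauto. Qed.

Lemma eqd_cls : forall s s' b, EQ s s' -> (EQ s b <-> EQ s' b).
Proof. intros; split; intros; eapply eqd_trans; eauto; apply eqd_sym; auto. Qed.

Lemma cls_inv : forall s s', EQ s s' -> rep s = rep s' /\ findP s = findP s' /\ findE s = findE s'.
Proof.
  intros s s' H; unfold rep, findP, findE.
  repeat split; (erewrite find_ext'; [reflexivity|]); intros b;
  rewrite (dec_iff _ _ (eqd_cls _ _ b H)); reflexivity.
Qed.

Lemma IBf_inv : forall n s s', EQ s s' -> IBf n s = IBf n s'.
Proof.
  intros n s s' H; destruct (cls_inv _ _ H) as [H1 [H2 H3]].
  destruct n; simpl; rewrite ?H1, ?H2, ?H3; reflexivity.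
Qed.

Lemma IB_inv : forall s s', EQ s s' -> IB s = IB s'.
Proof. intros; unfold IB, sz; rewrite (eqd_lam _ _ H); apply IBf_inv; auto. Qed.

Lemma findP_spec : forall s b, findP s = Some b -> In b Blist /\ EQ s b /\ isPair b = true.
Proof.
  intros s b H; apply find_some in H; destruct H as [Hin Hb].
  apply andb_true_iff in Hb; destruct Hb as [H1 H2]; apply (proj1 (dec_true _)) in H1; auto; repeat split; auto.
Qed.
Lemma findE_spec : forall s b, findE s = Some b -> In b Blist /\ EQ s b /\ isEncD b = true.
Proof.
  intros s b H; apply find_some in H; destruct H as [Hin Hb].
  apply andb_true_iff in Hb; destruct Hb as [H1 H2]; apply (proj1 (dec_true _)) in H1; auto; repeat split; auto.
Qed.

Lemma sz_pair : forall a b, sz (Pair a b) = S (sz a + sz b).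
Proof. reflexivity. Qed.
Lemma sz_enc : forall a b, sz (Enc a b) = S (sz a + sz b).
Proof. reflexivity. Qed.
Lemma sz_inv : forall a b, EQ a b -> sz a = sz b.
Proof. intros; unfold sz; rewrite (eqd_lam _ _ H); auto. Qed.

Lemma IBf_fuel : forall n m s, sz s <= n -> sz s <= m -> IBf n s = IBf m s.
Proof.
  induction n; intros m s Hn Hm.
  - pose proof (tsize_pos (Defs.app lam s)); unfold sz in *; lia.
  - destruct m. { pose proof (tsize_pos (Defs.app lam s)); unfold sz in *; lia. }
    simpl. destruct (findP s) as [b|] eqn:HP.
    + destruct (findP_spec _ _ HP) as [_ [Hq _]].
      pose proof (sz_inv _ _ Hq) as Hs.
      destruct b; try (destruct (findE s) as [b'|] eqn:HE'; [|reflexivity];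
        destruct (findE_spec _ _ HE') as [_ [Hq' _]]; pose proof (sz_inv _ _ Hq') as Hs';
        destruct b'; try reflexivity; rewrite sz_enc in Hs'; f_equal; apply IHn; lia).
      rewrite sz_pair in Hs; f_equal; apply IHn; lia.
    + destruct (findE s) as [b'|] eqn:HE'; [|reflexivity].
      destruct (findE_spec _ _ HE') as [_ [Hq' _]]; pose proof (sz_inv _ _ Hq') as Hs'.
      destruct b'; try reflexivity; rewrite sz_enc in Hs'; f_equal; apply IHn; lia.
Qed.

Lemma B_dy : forall s, In s Blist -> DY s.
Proof. intros; apply inB; auto. Qed.

Lemma rep_spec : forall s, In s Blist -> In (rep s) Blist /\ EQ s (rep s).
Proof.
  intros s Hs. unfold rep.
  destruct (find_exists _ (fun b => dec (EQ s b)) Blist s Hs) as [y Hy].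
  { apply (proj2 (dec_true _)); apply eqd_eq; apply B_dy; auto. }
  rewrite Hy. apply find_some in Hy. destruct Hy as [H1 H2]; apply (proj1 (dec_true _)) in H2; auto.
Qed.

Lemma IB_cases : forall s, In s Blist ->
  (exists c0 c1, IB s = vpair (IB c0) (IB c1) /\ In c0 Blist /\ In c1 Blist /\ EQ s (Pair c0 c1)) \/
  (exists c0 c1, IB s = venc (IB c0) (IB c1) /\ In c0 Blist /\ In c1 Blist /\ EQ s (Enc c0 c1)) \/
  IB s = vatom (rep s).
Proof.
  intros s Hs. unfold IB.
  remember (sz s) as n. destruct n.
  { pose proof (tsize_pos (Defs.app lam s)); unfold sz in *; lia. }
  simpl. destruct (findP s) as [b|] eqn:HP.
  - destruct (findP_spec _ _ HP) as [Hb [Hq Hpr]].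
    destruct b as [m|m|b1 b2|b1 b2]; simpl in Hpr; try discriminate.
    left. exists b1, b2.
    pose proof (sz_inv _ _ Hq) as Hsz; rewrite sz_pair in Hsz.
    apply inB in Hb; destruct Hb as [HbU Hbd].
    assert (In b1 Blist) by (apply inB; split; [eapply HUcl; eauto; apply st_pair_l|eapply dy_fst; eauto]).
    assert (In b2 Blist) by (apply inB; split; [eapply HUcl; eauto; apply st_pair_r|eapply dy_snd; eauto]).
    repeat split; auto. unfold IB; f_equal; apply IBf_fuel; lia.
  - destruct (findE s) as [b'|] eqn:HE'; [|right; right; reflexivity].
    destruct (findE_spec _ _ HE') as [Hb' [Hq' Hk]]; destruct b'; try (right; right; reflexivity).
    right; left; exists b'1, b'2.
    simpl in Hk; apply andb_true_iff in Hk; destruct Hk as [Hk1 Hk2]; apply (proj1 (dec_true _)) in Hk1; apply (proj1 (dec_true _)) in Hk2.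
    pose proof (sz_inv _ _ Hq') as Hsz; rewrite sz_enc in Hsz.
    apply inB in Hb'; destruct Hb' as [HbU Hbd].
    assert (In b'1 Blist) by (apply inB; split; [eapply HUcl; eauto; apply st_enc_l|auto]).
    assert (In b'2 Blist) by (apply inB; split; [eapply HUcl; eauto; apply st_enc_r|auto]).
    repeat split; auto. unfold IB; f_equal; apply IBf_fuel; lia.
Qed.

Lemma I_pair : forall a b, Imod (Pair a b) = vpair (Imod a) (Imod b).
Proof.
  intros a b. destruct (in_dec term_eq_dec (Pair a b) Blist) as [Hin|Hn].
  2: { simpl. destruct (in_dec term_eq_dec (Pair a b) Blist); [contradiction|reflexivity]. }
  rewrite I_B; auto.
  pose proof Hin as Hin'. apply inB in Hin'. destruct Hin' as [HU Hd].
  assert (Ha : In a Blist) by (apply inB; split; [eapply HUcl; eauto; apply st_pair_l|eapply dy_fst; eauto]).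
  assert (Hb : In b Blist) by (apply inB; split; [eapply HUcl; eauto; apply st_pair_r|eapply dy_snd; eauto]).
  rewrite (I_B a Ha), (I_B b Hb).
  destruct (IB_cases _ Hin) as [[c0 [c1 [He [H0 [H1 Hq]]]]]|[[c0 [c1 [He [H0 [H1 Hq]]]]]|He]].
  - rewrite He. f_equal; apply IB_inv.
    + apply eqd_sym; apply (eqd_proj0_pair _ _ _ _ _ _ _ _ Hq); apply B_dy; auto.
    + apply eqd_sym; apply (eqd_proj1_pair _ _ _ _ _ _ _ _ Hq); apply B_dy; auto.
  - pose proof (eqd_lam _ _ Hq) as Hc; simpl in Hc; discriminate.
  - exfalso. unfold IB in He. remember (sz (Pair a b)) as n; destruct n; [rewrite sz_pair in Heqn; discriminate|].
    simpl in He.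
    destruct (find_exists _ (fun b0 => dec (EQ (Pair a b) b0) && isPair b0) Blist (Pair a b) Hin) as [y Hy].
    { apply andb_true_iff; split; auto; apply (proj2 (dec_true _)); apply eqd_eq; auto. }
    unfold findP in He; rewrite Hy in He.
    apply find_some in Hy; destruct Hy as [_ Hy]; apply andb_true_iff in Hy; destruct Hy as [_ Hy].
    destruct y; try discriminate.
Qed.

Lemma I_enc : forall a k, (In (Enc a k) Blist -> DY a /\ DY k) -> Imod (Enc a k) = venc (Imod a) (Imod k).
Proof.
  intros a k Hd. destruct (in_dec term_eq_dec (Enc a k) Blist) as [Hin|Hn].
  2: { simpl. destruct (in_dec term_eq_dec (Enc a k) Blist); [contradiction|reflexivity]. }
  rewrite I_B; auto. destruct (Hd Hin) as [Hda Hdk].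
  pose proof Hin as Hin'. apply inB in Hin'. destruct Hin' as [HU Hdd].
  assert (Ha : In a Blist) by (apply inB; split; [eapply HUcl; eauto; apply st_enc_l|auto]).
  assert (Hb : In k Blist) by (apply inB; split; [eapply HUcl; eauto; apply st_enc_r|auto]).
  rewrite (I_B a Ha), (I_B k Hb).
  destruct (IB_cases _ Hin) as [[c0 [c1 [He [H0 [H1 Hq]]]]]|[[c0 [c1 [He [H0 [H1 Hq]]]]]|He]].
  - pose proof (eqd_lam _ _ Hq) as Hc; simpl in Hc; discriminate.
  - rewrite He. f_equal; apply IB_inv.
    + apply eqd_sym; apply (eqd_proj0_enc _ _ _ _ _ _ _ _ Hq); apply B_dy; auto.
    + apply eqd_sym; apply (eqd_proj1_enc _ _ _ _ _ _ _ _ Hq); apply B_dy; auto.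
  - exfalso. unfold IB in He. remember (sz (Enc a k)) as n; destruct n; [rewrite sz_enc in Heqn; discriminate|].
    simpl in He.
    destruct (findP (Enc a k)) as [y|] eqn:HP.
    { destruct (findP_spec _ _ HP) as [_ [Hq Hpr]]. destruct y; simpl in Hpr; try discriminate;
      pose proof (eqd_lam _ _ Hq) as Hc; simpl in Hc; discriminate. }
    destruct (find_exists _ (fun b0 => dec (EQ (Enc a k) b0) && isEncD b0) Blist (Enc a k) Hin) as [y Hy].
    { apply andb_true_iff; split; [apply (proj2 (dec_true _)); apply eqd_eq; auto|].
      simpl; apply andb_true_iff; split; apply (proj2 (dec_true _)); auto. }
    unfold findE in He; rewrite Hy in He.
    apply find_some in Hy; destruct Hy as [_ Hy]; apply andb_true_iff in Hy; destruct Hy as [_ Hy].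
    destruct y; try discriminate.
Qed.

Lemma enc_B_dy : forall a k, In (Enc a k) Blist -> constr a -> constr k -> DY a /\ DY k.
Proof.
  intros a k Hin Ha Hk. apply inB in Hin; destruct Hin as [HU _].
  pose proof (HUwf _ HU) as Hw; simpl in Hw; destruct Hw as [Hwa Hkk].
  split; apply wf_constr_dy; auto; destruct k; simpl in *; auto; contradiction.
Qed.

Lemma I_sound : forall a b, EQ a b -> Imod a = Imod b.
Proof.
  intros a b H; induction H.
  - destruct (HE _ _ H) as [Ht [Hu [Hdt Hdu]]].
    rewrite !I_B by (apply inB; auto). apply IB_inv; apply eqd_ax; auto.
  - reflexivity.
  - auto.
  - rewrite !I_pair; congruence.
  - destruct (eqd_constr _ _ H) as [C1 C2]. destruct (eqd_constr _ _ H0) as [C3 C4].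
    rewrite !I_enc; try congruence; intros Hin; eapply enc_B_dy; eauto.
  - rewrite !I_pair in IHeqd; congruence.
  - rewrite !I_pair in IHeqd; congruence.
  - rewrite !I_enc in IHeqd by auto; congruence.
  - rewrite !I_enc in IHeqd by auto; congruence.
  - congruence.
Qed.

Lemma nB_local : forall a, DY a -> ~ In a Blist ->
  (exists a0 a1, a = Pair a0 a1 /\ DY a0 /\ DY a1) \/
  (exists a0 a1, a = Enc a0 a1 /\ DY a0 /\ DY a1) \/
  (exists n, a = Var n) \/ (exists n, a = Nm n).
Proof.
  intros a Hd Hn. destruct (dy_local _ _ _ _ Hd) as [Hl|[Hl|Hl]]; auto.
  apply in_flat_map in Hl; destruct Hl as [s [Hs Hst]].
  destruct (HXU _ Hs) as [HU|[[n ->]|[n ->]]].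
  - exfalso; apply Hn; apply inB; split; auto; eapply HUcl; eauto.
  - simpl in Hst; destruct Hst as [<-|[]]; eauto.
  - simpl in Hst; destruct Hst as [<-|[]]; eauto.
Qed.

Lemma IB_not_leaf : forall s x, In s Blist -> IB s <> vleaf x.
Proof.
  intros s x Hs; destruct (IB_cases _ Hs) as [[c0 [c1 [He _]]]|[[c0 [c1 [He _]]]|He]]; rewrite He; discriminate.
Qed.

Lemma decomp_pair : forall a v0 v1, DY a -> Imod a = vpair v0 v1 ->
  exists a0 a1, DY a0 /\ DY a1 /\ EQ a (Pair a0 a1) /\ Imod a0 = v0 /\ Imod a1 = v1.
Proof.
  intros a v0 v1 Hd Hv. destruct (in_dec term_eq_dec a Blist) as [Hin|Hn].
  - rewrite I_B in Hv; auto.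
    destruct (IB_cases _ Hin) as [[c0 [c1 [He [H0 [H1 Hq]]]]]|[[c0 [c1 [He _]]]|He]]; rewrite He in Hv; try discriminate.
    injection Hv; intros <- <-. exists c0, c1. rewrite !I_B by auto. repeat split; auto; apply B_dy; auto.
  - destruct (nB_local _ Hd Hn) as [[a0 [a1 [-> [H0 H1]]]]|[[a0 [a1 [-> [H0 H1]]]]|[[n ->]|[n ->]]]].
    + rewrite I_pair in Hv; injection Hv; intros <- <-; exists a0, a1; repeat split; auto; apply eqd_eq; auto.
    + rewrite I_enc in Hv; [discriminate|]; auto.
    + simpl in Hv; destruct (in_dec term_eq_dec (Var n) Blist); [contradiction|discriminate].
    + simpl in Hv; destruct (in_dec term_eq_dec (Nm n) Blist); [contradiction|discriminate].
Qed.

Lemma decomp_enc : forall a v0 v1, DY a -> Imod a = venc v0 v1 ->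
  exists a0 a1, DY a0 /\ DY a1 /\ EQ a (Enc a0 a1) /\ Imod a0 = v0 /\ Imod a1 = v1.
Proof.
  intros a v0 v1 Hd Hv. destruct (in_dec term_eq_dec a Blist) as [Hin|Hn].
  - rewrite I_B in Hv; auto.
    destruct (IB_cases _ Hin) as [[c0 [c1 [He _]]]|[[c0 [c1 [He [H0 [H1 Hq]]]]]|He]]; rewrite He in Hv; try discriminate.
    injection Hv; intros <- <-. exists c0, c1. rewrite !I_B by auto. repeat split; auto; apply B_dy; auto.
  - destruct (nB_local _ Hd Hn) as [[a0 [a1 [-> [H0 H1]]]]|[[a0 [a1 [-> [H0 H1]]]]|[[n ->]|[n ->]]]].
    + rewrite I_pair in Hv; discriminate.
    + rewrite I_enc in Hv; auto. injection Hv; intros <- <-; exists a0, a1; repeat split; auto; apply eqd_eq; auto.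
    + simpl in Hv; destruct (in_dec term_eq_dec (Var n) Blist); [contradiction|discriminate].
    + simpl in Hv; destruct (in_dec term_eq_dec (Nm n) Blist); [contradiction|discriminate].
Qed.

Lemma I_faithful : forall v a b, DY a -> DY b -> Imod a = v -> Imod b = v -> EQ a b.
Proof.
  induction v; intros a b Ha Hb Hva Hvb.
  - assert (forall c, DY c -> Imod c = vleaf t -> c = t).
    { intros c Hc Hv. destruct (in_dec term_eq_dec c Blist) as [Hin|Hn].
      - rewrite I_B in Hv; auto; exfalso; eapply IB_not_leaf; eauto.
      - destruct c; simpl in Hv; destruct (in_dec term_eq_dec _ Blist); try contradiction; try discriminate;
        injection Hv; auto. }
    assert (a = t) by auto; assert (b = t) by auto; subst; apply eqd_eq; auto.
  - assert (forall c, DY c -> Imod c = vatom t -> EQ c t).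
    { intros c Hc Hv. destruct (in_dec term_eq_dec c Blist) as [Hin|Hn].
      - rewrite I_B in Hv; auto.
        destruct (IB_cases _ Hin) as [[c0 [c1 [He _]]]|[[c0 [c1 [He _]]]|He]]; rewrite He in Hv; try discriminate.
        injection Hv; intros <-; apply rep_spec; auto.
      - destruct c; simpl in Hv; destruct (in_dec term_eq_dec _ Blist); try contradiction; discriminate. }
    eapply eqd_trans; [apply H; eauto|apply eqd_sym; apply H; auto].
  - destruct (decomp_pair _ _ _ Ha Hva) as [a0 [a1 [Ha0 [Ha1 [Hqa [E0 E1]]]]]].
    destruct (decomp_pair _ _ _ Hb Hvb) as [b0 [b1 [Hb0 [Hb1 [Hqb [F0 F1]]]]]].
    eapply eqd_trans; [exact Hqa|]. eapply eqd_trans; [|apply eqd_sym; exact Hqb].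
    apply eqd_cons_pair; [apply IHv1|apply IHv2]; auto.
  - destruct (decomp_enc _ _ _ Ha Hva) as [a0 [a1 [Ha0 [Ha1 [Hqa [E0 E1]]]]]].
    destruct (decomp_enc _ _ _ Hb Hvb) as [b0 [b1 [Hb0 [Hb1 [Hqb [F0 F1]]]]]].
    eapply eqd_trans; [exact Hqa|]. eapply eqd_trans; [|apply eqd_sym; exact Hqb].
    apply eqd_cons_enc; [apply IHv1|apply IHv2]; auto.
Qed.

End Model.
Section Constr.
Variable iskey : nat -> bool.
Variable kinv : nat -> nat.
Variable T : list term.
Variable E : list (term * term).
Variable Ulist : list term.
Variable lam : nat -> term.
Hypothesis HUcl : forall s s', In s Ulist -> In s' (st s) -> In s' Ulist.
Hypothesis HUwf : forall s, In s Ulist -> wf iskey s.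
Hypothesis HE : forall a b, In (a,b) E ->
  In a Ulist /\ In b Ulist /\ dy iskey kinv T a /\ dy iskey kinv T b.
Hypothesis Hlam : forall a b, In (a,b) E -> Defs.app lam a = Defs.app lam b.
Hypothesis HXU : forall s, In s T -> In s Ulist \/ (exists n, s = Var n) \/ (exists n, s = Nm n).

Variable dom : list nat.
Variable mu : nat -> term.
Variables tl tr : term.
Hypothesis Hdisj : forall y, In y dom -> ~ In y (flat_map vars T).
Hypothesis Hmud : forall x, In x dom -> dy iskey kinv T (mu x).
Hypothesis Hmuw : forall x, In x dom -> wf iskey (mu x).
Hypothesis HstU : forall s, In s (st tl) \/ In s (st tr) -> In s Ulist.
Variable c0 : term.
Hypothesis Hc0 : In c0 (Blist iskey kinv T Ulist).

Local Notation DY := (dy iskey kinv T).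
Local Notation EQ := (eqd iskey kinv T E).
Local Notation Iv := (Imod iskey kinv T E Ulist lam).
Local Notation BL := (Blist iskey kinv T Ulist).

Definition ms := subst_on dom mu.
Definition sig r := Iv (ms r).
Definition occb (x : nat) : bool := if in_dec Nat.eq_dec x (vars tl ++ vars tr) then true else false.
Definition isAtom (r : term) : bool := match r with Var _ | Nm _ => true | _ => false end.
Definition isComp (r : term) : bool := match r with Pair _ _ | Enc _ _ => true | _ => false end.
Definition hasDom (r : term) : bool :=
  existsb (fun y => if in_dec Nat.eq_dec y dom then true else false) (vars r).
Definition atomsmu := map mu (filter (fun y => isAtom (mu y) && occb y) dom).
Definition BL' := BL ++ atomsmu.
Definition veqb (v w : val) : bool := if val_eq_dec v w then true else false.
Definition inC (v : val) : bool := existsb (fun b => veqb (Iv b) v) BL'.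
Definition rep' (v : val) : term :=
  match find (fun b => veqb (Iv b) v) BL' with Some b => b | None => c0 end.
Definition Rskel := filter (fun r => isComp r && hasDom r) (st tl ++ st tr).

Fixpoint G (v : val) : term :=
  if inC v then rep' v else
  match v with
  | vpair v0 v1 => if existsb (fun r => veqb (sig r) v) Rskel then Pair (G v0) (G v1) else c0
  | venc v0 v1 => match find (fun r => veqb (sig r) v) Rskel with
                  | Some (Enc _ r1) => Enc (G v0) (ms r1)
                  | _ => c0 end
  | _ => c0
  end.

Definition nu (x : nat) : term := if isAtom (mu x) && occb x then mu x else G (Iv (mu x)).
Definition ns := subst_on dom nu.
Definition Hv (v : val) := Iv (G v).

Lemma G_eq : forall v, G v = if inC v then rep' v else
  match v with
  | vpair v0 v1 => if existsb (fun r => veqb (sig r) v) Rskel then Pair (G v0) (G v1) else c0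
  | venc v0 v1 => match find (fun r => veqb (sig r) v) Rskel with
                  | Some (Enc _ r1) => Enc (G v0) (ms r1)
                  | _ => c0 end
  | _ => c0
  end.
Proof. destruct v; reflexivity. Qed.

Lemma veqb_true : forall v w, veqb v w = true <-> v = w.
Proof. intros; unfold veqb; destruct (val_eq_dec v w); split; congruence. Qed.

Lemma ms_var : forall x, In x dom -> ms (Var x) = mu x.
Proof. intros; unfold ms, subst_on; simpl; destruct (in_dec Nat.eq_dec x dom); tauto. Qed.
Lemma ns_var : forall x, In x dom -> ns (Var x) = nu x.
Proof. intros; unfold ns, subst_on; simpl; destruct (in_dec Nat.eq_dec x dom); tauto. Qed.
Lemma ms_pair : forall a b, ms (Pair a b) = Pair (ms a) (ms b).
Proof. reflexivity. Qed.
Lemma ms_enc : forall a b, ms (Enc a b) = Enc (ms a) (ms b).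
Proof. reflexivity. Qed.
Lemma ns_pair : forall a b, ns (Pair a b) = Pair (ns a) (ns b).
Proof. reflexivity. Qed.
Lemma ns_enc : forall a b, ns (Enc a b) = Enc (ns a) (ns b).
Proof. reflexivity. Qed.
Lemma ms_domfree : forall r, domfree dom r -> ms r = r.
Proof. intros; apply subst_domfree; auto. Qed.
Lemma ns_domfree : forall r, domfree dom r -> ns r = r.
Proof. intros; apply subst_domfree; auto. Qed.

Lemma BL'_spec : forall b, In b BL' -> DY b /\ wf iskey b /\
  ((forall s, In s (st b) -> In s Ulist) \/ (exists y, In y dom /\ occb y = true /\ isAtom (mu y) = true /\ mu y = b)).
Proof.
  intros b Hb; apply in_app_or in Hb; destruct Hb as [Hb|Hb].
  - pose proof (B_dy _ _ _ _ _ Hb) as Hd. apply inB in Hb; destruct Hb as [HU _].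
    repeat split; auto. left; intros; eapply HUcl; eauto.
  - unfold atomsmu in Hb; apply in_map_iff in Hb; destruct Hb as [y [<- Hy]].
    apply filter_In in Hy; destruct Hy as [Hy Hb]; apply andb_true_iff in Hb; destruct Hb.
    repeat split; auto. right; exists y; auto.
Qed.

Lemma rep'_spec : forall v, inC v = true -> Iv (rep' v) = v /\ In (rep' v) BL'.
Proof.
  intros v Hv. unfold inC in Hv. apply existsb_exists in Hv; destruct Hv as [b [Hb Hbv]].
  unfold rep'. destruct (find_exists _ (fun b => veqb (Iv b) v) BL' b Hb Hbv) as [y Hy].
  rewrite Hy. apply find_some in Hy. destruct Hy as [Hy1 Hy2]; apply veqb_true in Hy2; auto.
Qed.

Lemma rep'_in : forall v, In (rep' v) BL'.
Proof.
  intros v; unfold rep'. destruct (find _ BL') eqn:Hf.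
  - apply find_some in Hf; tauto.
  - apply in_or_app; left; auto.
Qed.

Lemma H_fix : forall v, inC v = true -> Hv v = v.
Proof. intros v H; unfold Hv; rewrite G_eq, H; apply rep'_spec; auto. Qed.

Lemma inC_B : forall b, In b BL' -> inC (Iv b) = true.
Proof. intros b Hb; unfold inC; apply existsb_exists; exists b; split; auto; apply veqb_true; auto. Qed.

Lemma IBs : forall s, In s BL -> Iv s = IB iskey kinv T E Ulist lam s.
Proof. intros; apply I_B; auto. Qed.

Lemma Iv_atom_nB : forall b, isAtom b = true -> ~ In b BL -> Iv b = vleaf b.
Proof.
  intros b Ha Hn; destruct b; simpl in Ha; try discriminate; simpl;
  destruct (in_dec term_eq_dec _ BL); try contradiction; reflexivity.
Qed.

Lemma inC_sub : forall v v0 v1, inC v = true -> (v = vpair v0 v1 \/ v = venc v0 v1) ->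
  inC v0 = true /\ inC v1 = true.
Proof.
  intros v v0 v1 H Hv'. unfold inC in H; apply existsb_exists in H; destruct H as [b [Hb Hv]].
  apply veqb_true in Hv.
  destruct (in_dec term_eq_dec b BL) as [Hin|Hn].
  - rewrite (IBs _ Hin) in Hv.
    destruct (IB_cases iskey kinv T E Ulist lam HUcl Hlam b Hin) as [[a0 [a1 [He [H0 [H1 _]]]]]|[[a0 [a1 [He [H0 [H1 _]]]]]|He]];
      rewrite He in Hv; subst v; destruct Hv' as [Hv'|Hv']; try discriminate;
      injection Hv'; intros <- <-; rewrite <- (IBs _ H0), <- (IBs _ H1);
      split; apply inC_B; apply in_or_app; auto.
  - apply in_app_or in Hb; destruct Hb as [Hb|Hb]; [contradiction|].
    unfold atomsmu in Hb; apply in_map_iff in Hb; destruct Hb as [y [Hy' Hy]].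
    apply filter_In in Hy; destruct Hy as [_ Hb]; apply andb_true_iff in Hb; destruct Hb as [Ha _].
    rewrite Hy' in Ha. rewrite (Iv_atom_nB _ Ha Hn) in Hv. subst v; destruct Hv'; discriminate.
Qed.


Definition P_abs (r : term) := forall x p, In x dom -> in_pos_var x r p ->
  abstractable iskey kinv (T ++ map Var dom) r p.

Inductive Good : term -> Prop :=
| Gc : forall r, domfree dom r -> DY r -> Good r
| Gv : forall x, In x dom -> Good (Var x)
| Gp : forall r0 r1, Good r0 -> Good r1 -> Good (Pair r0 r1)
| Ge : forall r0 r1, Good r0 -> Good r1 -> is_key_term iskey r1 -> Good (Enc r0 r1).

Lemma abs_root : forall Y r p, abstractable iskey kinv Y r p -> dy iskey kinv Y r.
Proof. intros Y r p [_ H]; apply (H (@nil nat) r); [left; reflexivity|destruct r; reflexivity]. Qed.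

Lemma abs_child : forall Y big child i p,
  (forall q, subterm_at big (i :: q) = subterm_at child q) ->
  abstractable iskey kinv Y big p -> p <> [] -> dy iskey kinv Y child.
Proof.
  intros Y big child i p Hs [_ H] Hp. apply (H [i] child).
  - right. exists [], i, p. repeat split; auto. unfold in_Pos; rewrite Hs; destruct child; simpl; discriminate.
  - rewrite Hs; destruct child; reflexivity.
Qed.

Lemma abs_sub : forall Y big child i p,
  (forall q, subterm_at big (i :: q) = subterm_at child q) ->
  abstractable iskey kinv Y big (i :: p) -> abstractable iskey kinv Y child p.
Proof.
  intros Y big child i p Hs [Hpos H]. split.
  - unfold in_Pos in *; rewrite <- Hs; auto.
  - intros q s Hq Hsq. apply (H (i :: q) s); [|rewrite Hs; auto].
    destruct Hq as [->|[q' [i' [r [-> [Hp [Hr ->]]]]]]].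
    + right. exists [], i, (i :: p). repeat split; auto; try discriminate.
      unfold in_Pos; rewrite Hs; destruct child; simpl; discriminate.
    + right. exists (i :: q'), i', r. repeat split; auto.
      unfold in_Pos in *; rewrite Hs; auto.
Qed.

Lemma vars_pos : forall r x, In x (vars r) -> exists p, subterm_at r p = Some (Var x).
Proof.
  induction r; simpl; intros x Hx.
  - destruct Hx as [<-|[]]; exists []; reflexivity.
  - destruct Hx.
  - apply in_app_or in Hx; destruct Hx as [Hx|Hx].
    + destruct (IHr1 _ Hx) as [p Hp]; exists (0 :: p); simpl; auto.
    + destruct (IHr2 _ Hx) as [p Hp]; exists (1 :: p); simpl; auto.
  - apply in_app_or in Hx; destruct Hx as [Hx|Hx].
    + destruct (IHr1 _ Hx) as [p Hp]; exists (0 :: p); simpl; auto.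
    + destruct (IHr2 _ Hx) as [p Hp]; exists (1 :: p); simpl; auto.
Qed.

Lemma domfree_dec : forall r, domfree dom r \/ exists y, In y (vars r) /\ In y dom.
Proof.
  intros r. destruct (existsb (fun y => if in_dec Nat.eq_dec y dom then true else false) (vars r)) eqn:He.
  - right. apply existsb_exists in He; destruct He as [y [Hy Hd]].
    destruct (in_dec Nat.eq_dec y dom); [eauto|discriminate].
  - left. intros y Hy Hd. assert (existsb (fun y => if in_dec Nat.eq_dec y dom then true else false) (vars r) = true).
    { apply existsb_exists; exists y; split; auto; destruct (in_dec Nat.eq_dec y dom); tauto. }
    congruence.
Qed.

Lemma good_of_comp : forall big r0 r1,
  (forall q, subterm_at big (0 :: q) = subterm_at r0 q) ->
  (forall q, subterm_at big (1 :: q) = subterm_at r1 q) ->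
  (forall x, In x (vars big) <-> In x (vars r0) \/ In x (vars r1)) ->
  (forall x, subterm_at big [] <> Some (Var x)) ->
  P_abs big -> ~ domfree dom big ->
  dy iskey kinv (T ++ map Var dom) r0 /\ dy iskey kinv (T ++ map Var dom) r1 /\ P_abs r0 /\ P_abs r1.
Proof.
  intros big r0 r1 H0 H1 Hv Hnv HP Hnd.
  destruct (domfree_dec big) as [|[y [Hy Hyd]]]; [contradiction|].
  destruct (vars_pos _ _ Hy) as [p Hp].
  assert (Hpn : p <> []) by (intros ->; eapply Hnv; eauto).
  pose proof (HP y p Hyd Hp) as Ha.
  split; [exact (abs_child _ big r0 0 p H0 Ha Hpn)|]. split; [exact (abs_child _ big r1 1 p H1 Ha Hpn)|].
  split; intros x q Hx Hq.
  - apply (abs_sub _ big r0 0 q H0). apply (HP x (0 :: q) Hx). unfold in_pos_var; rewrite H0; auto.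
  - apply (abs_sub _ big r1 1 q H1). apply (HP x (1 :: q) Hx). unfold in_pos_var; rewrite H1; auto.
Qed.

Lemma good_of : forall r, wf iskey r -> P_abs r -> (domfree dom r -> DY r) -> Good r.
Proof.
  induction r; intros Hw HP Hd.
  - destruct (in_dec Nat.eq_dec n dom) as [Hn|Hn].
    + apply Gv; auto.
    + assert (domfree dom (Var n)) by (intros y [<-|[]]; auto). apply Gc; auto.
  - assert (domfree dom (Nm n)) by (intros y []). apply Gc; auto.
  - destruct (domfree_dec (Pair r1 r2)) as [Hf|Hnf]; [apply Gc; auto|].
    destruct (good_of_comp (Pair r1 r2) r1 r2) as [D1 [D2 [P1 P2]]]; auto.
    + intros x; simpl; split; [apply in_app_or|apply in_or_app].
    + intros x; discriminate.
    + intros Hf; destruct Hnf as [y [Hy Hyd]]; eapply Hf; eauto.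
    + destruct Hw as [W1 W2]. apply Gp; [apply IHr1|apply IHr2]; auto;
      intros Hf; eapply dy_strength; eauto.
  - destruct (domfree_dec (Enc r1 r2)) as [Hf|Hnf]; [apply Gc; auto|].
    destruct (good_of_comp (Enc r1 r2) r1 r2) as [D1 [D2 [P1 P2]]]; auto.
    + intros x; simpl; split; [apply in_app_or|apply in_or_app].
    + intros x; discriminate.
    + intros Hf; destruct Hnf as [y [Hy Hyd]]; eapply Hf; eauto.
    + destruct Hw as [W1 W2]. apply Ge; [apply IHr1|apply IHr2| ]; auto;
      try (intros Hf; eapply dy_strength; eauto).
      destruct r2; simpl in *; auto; contradiction.
Qed.

Lemma key_wf : forall k, is_key_term iskey k -> wf iskey k.
Proof. destruct k; simpl; auto; contradiction. Qed.

Lemma wf_ms_pair : forall a b, wf iskey (ms (Pair a b)) -> wf iskey (ms a) /\ wf iskey (ms b).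
Proof. intros a b H; exact H. Qed.
Lemma wf_ms_enc : forall a b, wf iskey (ms (Enc a b)) -> wf iskey (ms a) /\ is_key_term iskey (ms b).
Proof. intros a b H; exact H. Qed.

Lemma Good_ms_dy : forall r, Good r -> wf iskey (ms r) -> DY (ms r).
Proof.
  intros r H; induction H; intros Hw.
  - rewrite ms_domfree; auto.
  - rewrite ms_var; auto.
  - destruct (wf_ms_pair _ _ Hw); rewrite ms_pair; apply dy_pair; auto.
  - destruct (wf_ms_enc _ _ Hw); rewrite ms_enc; apply dy_enc; auto.
    apply IHGood2; apply key_wf; auto.
Qed.

Lemma hasDom_true : forall r, hasDom r = true -> ~ domfree dom r.
Proof.
  intros r H Hf. unfold hasDom in H; apply existsb_exists in H; destruct H as [y [Hy Hd]].
  destruct (in_dec Nat.eq_dec y dom); [eapply Hf; eauto|discriminate].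
Qed.
Lemma hasDom_false : forall r, hasDom r = false -> domfree dom r.
Proof.
  intros r H y Hy Hd. assert (hasDom r = true); [|congruence].
  apply existsb_exists; exists y; split; auto; destruct (in_dec Nat.eq_dec y dom); tauto.
Qed.

Lemma Good_pair_inv : forall r0 r1, Good (Pair r0 r1) -> hasDom (Pair r0 r1) = true -> Good r0 /\ Good r1.
Proof. intros r0 r1 H Hd; inversion H; subst; auto. exfalso; eapply hasDom_true; eauto. Qed.
Lemma Good_enc_inv : forall r0 r1, Good (Enc r0 r1) -> hasDom (Enc r0 r1) = true ->
  Good r0 /\ Good r1 /\ is_key_term iskey r1.
Proof. intros r0 r1 H Hd; inversion H; subst; auto. exfalso; eapply hasDom_true; eauto. Qed.

Lemma st_or_trans : forall a b, In b (st tl) \/ In b (st tr) -> In a (st b) -> In a (st tl) \/ In a (st tr).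
Proof. intros a b [H|H] Hab; [left|right]; eapply st_trans; eauto. Qed.

Lemma Good_sub : forall r, Good r -> forall r', In r' (st r) -> hasDom r' = true -> Good r'.
Proof.
  intros r H; induction H; intros r' Hr' Hd.
  - exfalso; eapply hasDom_true; eauto; intros y Hy; apply H; eapply vars_st; eauto.
  - simpl in Hr'; destruct Hr' as [<-|[]]; apply Gv; auto.
  - simpl in Hr'; destruct Hr' as [<-|Hr']; [apply Gp; auto|].
    apply in_app_or in Hr'; destruct Hr'; auto.
  - simpl in Hr'; destruct Hr' as [<-|Hr']; [apply Ge; auto|].
    apply in_app_or in Hr'; destruct Hr'; auto.
Qed.


Hypothesis HGl : Good tl.
Hypothesis HGr : Good tr.
Hypothesis Hwml : wf iskey (ms tl).
Hypothesis Hwmr : wf iskey (ms tr).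

Lemma wf_ms_st : forall r, In r (st tl) \/ In r (st tr) -> wf iskey (ms r).
Proof.
  intros r [H|H]; [eapply wf_st; [exact Hwml|]|eapply wf_st; [exact Hwmr|]]; apply app_st; auto.
Qed.

Lemma Good_st : forall r, In r (st tl) \/ In r (st tr) -> hasDom r = true -> Good r.
Proof. intros r [H|H] Hd; [eapply Good_sub; [exact HGl| |]|eapply Good_sub; [exact HGr| |]]; eauto. Qed.

Lemma Rskel_spec : forall r, In r Rskel ->
  (In r (st tl) \/ In r (st tr)) /\ isComp r = true /\ hasDom r = true /\ Good r /\ wf iskey (ms r).
Proof.
  intros r H. unfold Rskel in H; apply filter_In in H; destruct H as [H Hb].
  apply andb_true_iff in Hb; destruct Hb as [Hc Hd].
  assert (Hs : In r (st tl) \/ In r (st tr)) by (apply in_app_or; auto).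
  repeat split; auto. apply Good_st; auto. apply wf_ms_st; auto.
Qed.

Lemma BL_dy_wf : forall b, In b BL -> DY b /\ wf iskey b.
Proof. intros b Hb; split; [apply B_dy with (Ulist := Ulist); auto|apply HUwf; apply inB in Hb; tauto]. Qed.

Lemma G_dy_wf : forall v, DY (G v) /\ wf iskey (G v).
Proof.
  assert (Hc0' := BL_dy_wf c0 Hc0).
  assert (Hr : forall v, DY (rep' v) /\ wf iskey (rep' v))
    by (intros v; destruct (BL'_spec _ (rep'_in v)) as [? [? _]]; auto).
  induction v; rewrite G_eq; destruct (inC _); auto.
  - destruct (existsb (fun r => veqb (sig r) (vpair v1 v2)) Rskel); auto.
    destruct IHv1, IHv2; split; [apply dy_pair|split]; auto.
  - destruct (find (fun r => veqb (sig r) (venc v1 v2)) Rskel) as [r|] eqn:Hf; auto.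
    apply find_some in Hf; destruct Hf as [Hr' _].
    destruct (Rskel_spec _ Hr') as [Hs [Hcomp [Hd [Hg Hw]]]].
    destruct r as [n|n|a b|a b]; auto.
    destruct (Good_enc_inv _ _ Hg Hd) as [Ga [Gb Kb]].
    destruct (wf_ms_enc _ _ Hw) as [Wa Kb'].
    destruct IHv1. split; [apply dy_enc|split]; auto.
    apply Good_ms_dy; auto; apply key_wf; auto.
Qed.

Lemma occb_true : forall y, In (Var y) (st tl) \/ In (Var y) (st tr) -> occb y = true.
Proof.
  intros y H. unfold occb. destruct (in_dec Nat.eq_dec y (vars tl ++ vars tr)) as [|Hn]; auto.
  exfalso; apply Hn; apply in_or_app.
  destruct H as [H|H]; [left|right]; eapply vars_st; eauto; simpl; auto.
Qed.

Lemma nu_dy_wf : forall x, In x dom -> DY (nu x) /\ wf iskey (nu x).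
Proof.
  intros x Hx; unfold nu; destruct (isAtom (mu x) && occb x); auto; apply G_dy_wf.
Qed.

Lemma key_atom : forall k, is_key_term iskey k -> isAtom k = true.
Proof. destruct k; simpl; auto; contradiction. Qed.

Lemma nu_key : forall x, In x dom -> In (Var x) (st tl) \/ In (Var x) (st tr) ->
  is_key_term iskey (mu x) -> nu x = mu x.
Proof.
  intros x Hx Hs Hk; unfold nu. rewrite (key_atom _ Hk), (occb_true _ Hs); reflexivity.
Qed.

Lemma Good_ns : forall r, Good r -> wf iskey (ms r) -> (In r (st tl) \/ In r (st tr)) ->
  DY (ns r) /\ wf iskey (ns r).
Proof.
  intros r H; induction H; intros Hw Hs.
  - rewrite ns_domfree by auto. split; [auto|apply HUwf; apply HstU; auto].
  - rewrite ns_var; auto. apply nu_dy_wf; auto.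
  - destruct (wf_ms_pair _ _ Hw).
    destruct IHGood1 as [D1 W1]; auto. { eapply st_or_trans; eauto; apply st_pair_l. }
    destruct IHGood2 as [D2 W2]; auto. { eapply st_or_trans; eauto; apply st_pair_r. }
    rewrite ns_pair; split; [apply dy_pair|split]; auto.
  - destruct (wf_ms_enc _ _ Hw) as [Wa Kb].
    destruct IHGood1 as [D1 W1]; auto. { eapply st_or_trans; eauto; apply st_enc_l. }
    destruct IHGood2 as [D2 W2]; auto. { apply key_wf; auto. } { eapply st_or_trans; eauto; apply st_enc_r. }
    assert (K : is_key_term iskey (ns r1)).
    { destruct r1 as [n|n|a b|a b]; simpl in H1; try contradiction.
      - destruct (in_dec Nat.eq_dec n dom) as [Hn|Hn].
        + rewrite ns_var; auto. rewrite ms_var in Kb; auto. rewrite nu_key; auto.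
          eapply st_or_trans; eauto; apply st_enc_r.
        + unfold ns, subst_on; simpl; destruct (in_dec Nat.eq_dec n dom); [contradiction|exact I].
      - exact H1. }
    rewrite ns_enc; split; [apply dy_enc|split]; auto.
Qed.


Lemma Iv_pair : forall a b, Iv (Pair a b) = vpair (Iv a) (Iv b).
Proof. intros; apply (I_pair iskey kinv T E Ulist lam HUcl Hlam). Qed.
Lemma Iv_enc : forall a b, DY a -> DY b -> Iv (Enc a b) = venc (Iv a) (Iv b).
Proof. intros; apply (I_enc iskey kinv T E Ulist lam HUcl Hlam); auto. Qed.
Lemma sig_pair : forall a b, sig (Pair a b) = vpair (sig a) (sig b).
Proof. intros; unfold sig; rewrite ms_pair; apply Iv_pair. Qed.
Lemma sig_enc : forall a b, DY (ms a) -> DY (ms b) -> sig (Enc a b) = venc (sig a) (sig b).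
Proof. intros; unfold sig; rewrite ms_enc; apply Iv_enc; auto. Qed.

Lemma domfree_inC : forall r, domfree dom r -> Good r -> wf iskey (ms r) ->
  (In r (st tl) \/ In r (st tr)) -> inC (sig r) = true.
Proof.
  intros r Hf Hg Hw Hs. pose proof (Good_ms_dy _ Hg Hw) as Hd.
  unfold sig in *; rewrite ms_domfree in * by auto.
  apply inC_B; apply in_or_app; left; apply inB; split; auto.
Qed.

Lemma key_inC : forall r, Good r -> is_key_term iskey r -> is_key_term iskey (ms r) ->
  (In r (st tl) \/ In r (st tr)) -> inC (sig r) = true.
Proof.
  intros r Hg Hk Hk' Hs.
  destruct (domfree_dec r) as [Hf|[y [Hy Hyd]]].
  - apply domfree_inC; auto. apply key_wf; auto.
  - destruct r as [n|n|a b|a b]; simpl in Hk; try contradiction.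
    + simpl in Hy; destruct Hy as [Hy|[]]; subst y.
      unfold sig; rewrite ms_var in * by auto. apply inC_B; apply in_or_app; right.
      unfold atomsmu; apply in_map_iff; exists n; split; auto.
      apply filter_In; split; auto. rewrite (key_atom _ Hk'), (occb_true _ Hs); reflexivity.
Qed.

Lemma Good_val : forall r, Good r -> wf iskey (ms r) -> (In r (st tl) \/ In r (st tr)) ->
  Iv (ns r) = Hv (sig r).
Proof.
  intros r H; induction H; intros Hw Hs.
  - rewrite H_fix by (apply domfree_inC; auto; apply Gc; auto).
    unfold sig; rewrite ns_domfree, ms_domfree; auto.
  - rewrite ns_var by auto. unfold nu. destruct (isAtom (mu x) && occb x) eqn:Ha.
    + rewrite H_fix; unfold sig; rewrite ms_var; auto.
      apply inC_B; apply in_or_app; right. unfold atomsmu; apply in_map_iff; exists x; split; auto.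
      apply filter_In; split; auto.
    + unfold Hv, sig; rewrite ms_var; auto.
  - destruct (wf_ms_pair _ _ Hw) as [W0 W1].
    assert (S0 : In r0 (st tl) \/ In r0 (st tr)) by (apply (st_or_trans r0 (Pair r0 r1) Hs); apply st_pair_l).
    assert (S1 : In r1 (st tl) \/ In r1 (st tr)) by (apply (st_or_trans r1 (Pair r0 r1) Hs); apply st_pair_r).
    destruct (hasDom (Pair r0 r1)) eqn:Hd.
    2: { apply hasDom_false in Hd. rewrite H_fix by (apply domfree_inC; auto; apply Gp; auto).
         unfold sig; rewrite ns_domfree, ms_domfree; auto. }
    rewrite ns_pair, Iv_pair, IHGood1, IHGood2 by auto. rewrite sig_pair.
    destruct (inC (vpair (sig r0) (sig r1))) eqn:Hc.
    + destruct (inC_sub _ _ _ Hc (or_introl eq_refl)). rewrite !H_fix; auto.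
    + unfold Hv at 3. rewrite G_eq, Hc.
      replace (existsb (fun r => veqb (sig r) (vpair (sig r0) (sig r1))) Rskel) with true.
      * rewrite Iv_pair; reflexivity.
      * symmetry; apply existsb_exists. exists (Pair r0 r1); split.
        -- unfold Rskel; apply filter_In; split; [apply in_or_app; auto|rewrite Hd; reflexivity].
        -- apply veqb_true; apply sig_pair.
  - destruct (wf_ms_enc _ _ Hw) as [W0 K1].
    assert (S0 : In r0 (st tl) \/ In r0 (st tr)) by (apply (st_or_trans r0 (Enc r0 r1) Hs); apply st_enc_l).
    assert (S1 : In r1 (st tl) \/ In r1 (st tr)) by (apply (st_or_trans r1 (Enc r0 r1) Hs); apply st_enc_r).
    assert (W1 : wf iskey (ms r1)) by (apply key_wf; auto).
    destruct (hasDom (Enc r0 r1)) eqn:Hd.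
    2: { apply hasDom_false in Hd. rewrite H_fix by (apply domfree_inC; auto; apply Ge; auto).
         unfold sig; rewrite ns_domfree, ms_domfree; auto. }
    destruct (Good_ns _ H W0 S0) as [N0 _]. destruct (Good_ns _ H0 W1 S1) as [N1 _].
    pose proof (Good_ms_dy _ H W0) as M0. pose proof (Good_ms_dy _ H0 W1) as M1.
    rewrite ns_enc, Iv_enc, IHGood1, IHGood2 by auto. rewrite sig_enc by auto.
    assert (F1 : Hv (sig r1) = sig r1) by (apply H_fix; apply key_inC; auto).
    rewrite F1.
    destruct (inC (venc (sig r0) (sig r1))) eqn:Hc.
    + destruct (inC_sub _ _ _ Hc (or_intror eq_refl)). rewrite !H_fix; auto.
    + unfold Hv at 2. rewrite G_eq, Hc.
      assert (Hin : In (Enc r0 r1) Rskel).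
      { unfold Rskel; apply filter_In; split; [apply in_or_app; auto|rewrite Hd; reflexivity]. }
      destruct (find_exists _ (fun r => veqb (sig r) (venc (sig r0) (sig r1))) Rskel _ Hin) as [r' Hr'].
      { apply veqb_true; apply sig_enc; auto. }
      rewrite Hr'. apply find_some in Hr'. destruct Hr' as [Hr'in Hr'v]. apply veqb_true in Hr'v.
      destruct (Rskel_spec _ Hr'in) as [Hs' [Hcomp [Hd' [Hg' Hw']]]].
      destruct r' as [n|n|a b|a b]; simpl in Hcomp; try discriminate.
      * rewrite sig_pair in Hr'v; discriminate.
      * destruct (Good_enc_inv _ _ Hg' Hd') as [Ga [Gb Kb]].
        destruct (wf_ms_enc _ _ Hw') as [Wa Kb'].
        pose proof (Good_ms_dy _ Ga Wa) as Ma. pose proof (Good_ms_dy _ Gb (key_wf _ Kb')) as Mb.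
        rewrite sig_enc in Hr'v by auto. injection Hr'v; intros E1 E0.
        rewrite Iv_enc; [|apply G_dy_wf|auto]. fold (Hv (sig r0)). fold (sig b). rewrite E1; reflexivity.
Qed.


Lemma nu_domfree : forall x, In x dom -> domfree dom (nu x).
Proof.
  intros x Hx y Hy Hyd. destruct (nu_dy_wf x Hx) as [D _].
  apply (Hdisj y Hyd). eapply dy_vars; eauto.
Qed.

Lemma key_st : forall k, is_key_term iskey k -> st k = [k].
Proof. destruct k; simpl; auto; contradiction. Qed.
Lemma atom_st : forall k, isAtom k = true -> st k = [k].
Proof. destruct k; simpl; auto; discriminate. Qed.

Definition Case3 (s : term) : Prop :=
  In s Ulist \/ (exists y, In y dom /\ occb y = true /\ mu y = s) \/ (exists r, In r Rskel /\ G (sig r) = s).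

Lemma Case3_rep : forall v s, In s (st (rep' v)) -> Case3 s.
Proof.
  intros v s Hs. unfold Case3.
  destruct (BL'_spec _ (rep'_in v)) as [_ [_ [HU|[y [Hy [Ho [Ha Hm]]]]]]].
  - left; auto.
  - right; left; exists y; repeat split; auto. rewrite <- Hm in Hs. rewrite atom_st in Hs by auto.
    destruct Hs as [<-|[]]; auto.
Qed.
Lemma Case3_c0 : forall s, In s (st c0) -> Case3 s.
Proof. intros s Hs; left; eapply HUcl; [exact (proj1 (proj1 (inB _ _ _ _ c0) Hc0))|exact Hs]. Qed.

Lemma st_G : forall v s, In s (st (G v)) -> Case3 s.
Proof.
  induction v as [tt|tt|v1 IHv1 v2 IHv2|v1 IHv1 v2 IHv2]; intros s Hs;
  rewrite G_eq in Hs; destruct (inC _) eqn:Hc; try (apply (Case3_rep _ _ Hs));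
  try (apply (Case3_c0 _ Hs)).
  - destruct (existsb (fun r => veqb (sig r) (vpair v1 v2)) Rskel) eqn:He;
      [|apply (Case3_c0 _ Hs)].
    simpl in Hs; destruct Hs as [<-|Hs].
    + unfold Case3; right; right. pose proof He as He'. apply existsb_exists in He'; destruct He' as [r [Hr Hv]]; apply veqb_true in Hv.
      exists r; split; auto. rewrite Hv, G_eq, Hc, He. reflexivity.
    + apply in_app_or in Hs; destruct Hs; auto.
  - destruct (find (fun r => veqb (sig r) (venc v1 v2)) Rskel) as [r|] eqn:Hf;
      [|apply (Case3_c0 _ Hs)].
    destruct r as [n|n|a b|a b]; try (apply (Case3_c0 _ Hs)).
    pose proof Hf as Hf'. apply find_some in Hf'; destruct Hf' as [Hr Hv]; apply veqb_true in Hv.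
    destruct (Rskel_spec _ Hr) as [Hst [_ [Hd [Hg Hw]]]].
    destruct (wf_ms_enc _ _ Hw) as [_ Kb].
    simpl in Hs; destruct Hs as [<-|Hs].
    + unfold Case3; right; right. exists (Enc a b); split; auto. rewrite Hv, G_eq, Hc, Hf; reflexivity.
    + apply in_app_or in Hs; destruct Hs as [Hs|Hs]; auto.
      rewrite key_st in Hs by auto. destruct Hs as [<-|[]].
      assert (Hbs : In b (st tl) \/ In b (st tr)) by (apply (st_or_trans b (Enc a b) Hst); apply st_enc_r).
      destruct (domfree_dec b) as [Hfb|[y [Hy Hyd]]].
      * unfold Case3; left; rewrite ms_domfree by auto; apply HstU; auto.
      * destruct b as [m|m|b1 b2|b1 b2]; simpl in Hy; try contradiction;
          try (destruct (Good_enc_inv _ _ Hg Hd) as [_ [_ Kb0]]; simpl in Kb0; contradiction).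
        destruct Hy as [Hy|[]]; subst y. unfold Case3; right; left. exists m; repeat split; auto.
        apply occb_true; auto. rewrite ms_var; auto.
Qed.


Lemma st_nu : forall x s, In x dom -> In s (st (nu x)) -> Case3 s.
Proof.
  intros x s Hx Hs. unfold nu in Hs. destruct (isAtom (mu x) && occb x) eqn:Ha.
  - apply andb_true_iff in Ha; destruct Ha as [Ha Ho].
    rewrite atom_st in Hs by auto. destruct Hs as [<-|[]].
    right; left; exists x; auto.
  - eapply st_G; eauto.
Qed.

Definition teqb (a b : term) : bool := if term_eq_dec a b then true else false.
Lemma teqb_true : forall a b, teqb a b = true <-> a = b.
Proof. intros; unfold teqb; destruct (term_eq_dec a b); split; congruence. Qed.

Definition fmap (s : term) : term :=
  if in_dec term_eq_dec s Ulist then s else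
  match find (fun y => occb y && teqb (mu y) s) dom with
  | Some y => Var y
  | None => match find (fun r => teqb (G (sig r)) s) Rskel with
            | Some r => r | None => s end
  end.

Definition recover (z : term) : term := match z with Var y => mu y | _ => G (sig z) end.

Lemma occb_st : forall y, occb y = true -> In (Var y) (st tl) \/ In (Var y) (st tr).
Proof.
  intros y H. unfold occb in H. destruct (in_dec Nat.eq_dec y (vars tl ++ vars tr)) as [Hy|]; [|discriminate].
  assert (forall r, In y (vars r) -> In (Var y) (st r)).
  { induction r; simpl; intros Hr; try contradiction.
    - destruct Hr as [<-|[]]; auto.
    - right; apply in_app_or in Hr; apply in_or_app; destruct Hr; auto.
    - right; apply in_app_or in Hr; apply in_or_app; destruct Hr; auto. }
  apply in_app_or in Hy; destruct Hy; auto.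
Qed.

Lemma fmap_in : forall s, Case3 s -> In (fmap s) Ulist.
Proof.
  intros s Hc. unfold fmap. destruct (in_dec term_eq_dec s Ulist) as [|Hn]; auto.
  destruct (find (fun y => occb y && teqb (mu y) s) dom) as [y|] eqn:Hf.
  - apply find_some in Hf; destruct Hf as [Hy Hb]; apply andb_true_iff in Hb; destruct Hb as [Ho _].
    apply HstU; apply occb_st; auto.
  - destruct (find (fun r => teqb (G (sig r)) s) Rskel) as [r|] eqn:Hf2.
    + apply find_some in Hf2; destruct Hf2 as [Hr _]. apply HstU. apply Rskel_spec; auto.
    + exfalso. destruct Hc as [Hc|[[y [Hy [Ho Hm]]]|[r [Hr Hg]]]]; [contradiction| |].
      * eapply find_none in Hf; eauto. rewrite Ho in Hf; simpl in Hf.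
        assert (teqb (mu y) s = true) by (apply teqb_true; auto). congruence.
      * eapply find_none in Hf2; eauto. assert (teqb (G (sig r)) s = true) by (apply teqb_true; auto). congruence.
Qed.

Lemma fmap_rec : forall s, domfree dom s ->
  (domfree dom (fmap s) -> fmap s = s) /\ (~ domfree dom (fmap s) -> s = recover (fmap s)).
Proof.
  intros s Hs. unfold fmap. destruct (in_dec term_eq_dec s Ulist) as [|Hn]; [split; auto; contradiction|].
  destruct (find (fun y => occb y && teqb (mu y) s) dom) as [y|] eqn:Hf.
  - apply find_some in Hf; destruct Hf as [Hy Hb]; apply andb_true_iff in Hb; destruct Hb as [_ Hm].
    apply teqb_true in Hm. split.
    + intros Hd; exfalso; apply (Hd y); simpl; auto.
    + intros _; simpl; auto.
  - destruct (find (fun r => teqb (G (sig r)) s) Rskel) as [r|] eqn:Hf2; [|split; auto; contradiction].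
    apply find_some in Hf2; destruct Hf2 as [Hr Hg]; apply teqb_true in Hg.
    destruct (Rskel_spec _ Hr) as [_ [Hcomp [Hd _]]]. split.
    + intros Hf'; exfalso; eapply hasDom_true; eauto.
    + intros _. destruct r; simpl in Hcomp; try discriminate; simpl; auto.
Qed.

Lemma fmap_inj : forall s s', domfree dom s -> domfree dom s' -> fmap s = fmap s' -> s = s'.
Proof.
  intros s s' H H' Heq'. destruct (fmap_rec _ H) as [A1 A2]. destruct (fmap_rec _ H') as [B1 B2].
  destruct (classic (domfree dom (fmap s))) as [Hd|Hd].
  - pose proof (A1 Hd) as E1. rewrite Heq' in Hd. pose proof (B1 Hd) as E2. congruence.
  - pose proof (A2 Hd) as E1. rewrite Heq' in Hd. pose proof (B2 Hd) as E2. congruence.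
Qed.

Lemma NoDup_map_inj : forall (A B : Type) (f : A -> B) l, NoDup l ->
  (forall a b, In a l -> In b l -> f a = f b -> a = b) -> NoDup (map f l).
Proof.
  induction l; simpl; intros Hn Hi; constructor.
  - inversion Hn; subst. intros Hin. apply in_map_iff in Hin; destruct Hin as [b [Hb Hbl]].
    assert (b = a) by (apply Hi; auto). subst; contradiction.
  - inversion Hn; subst. apply IHl; auto.
Qed.

Lemma domfree_st : forall s t, In s (st t) -> domfree dom t -> domfree dom s.
Proof. intros s t Hs Ht y Hy; apply Ht; eapply vars_st; eauto. Qed.

Lemma card_nu : forall x, In x dom -> card (st (nu x)) <= card Ulist.
Proof.
  intros x Hx. unfold card.
  set (l := nodup term_eq_dec (st (nu x))).
  assert (Hl : forall s, In s l -> In s (st (nu x))) by (intros s Hs; apply nodup_In in Hs; auto).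
  rewrite <- (length_map fmap l).
  apply NoDup_incl_length.
  - apply NoDup_map_inj; [apply NoDup_nodup|].
    intros a b Ha Hb; apply fmap_inj; eapply domfree_st; eauto; apply nu_domfree; auto.
  - intros z Hz. apply in_map_iff in Hz; destruct Hz as [s [<- Hs]].
    apply nodup_In. apply fmap_in. eapply st_nu; eauto.
Qed.

Hypothesis Heq : EQ (ms tl) (ms tr).

Lemma ns_eq : EQ (ns tl) (ns tr).
Proof.
  destruct (Good_ns _ HGl Hwml (or_introl (st_refl tl))) as [Dl _].
  destruct (Good_ns _ HGr Hwmr (or_intror (st_refl tr))) as [Dr _].
  apply (I_faithful iskey kinv T E Ulist lam HUcl Hlam HXU (Iv (ns tl))); auto.
  rewrite (Good_val _ HGl Hwml (or_introl (st_refl tl))).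
  rewrite (Good_val _ HGr Hwmr (or_intror (st_refl tr))).
  unfold sig; rewrite (I_sound iskey kinv T E Ulist lam HUcl HUwf HE Hlam _ _ Heq); reflexivity.
Qed.

End Constr.

Lemma pubs_nq : forall qv l, has_qvar qv l = false -> pubs_t qv l = [l].
Proof. intros qv l H; destruct l; cbn [pubs_t]; rewrite H; reflexivity. Qed.

Lemma E_term_dy : forall qv iskey kinv S A b l, In b A ->
  wf iskey l -> (forall s, In s (pubs_t qv l) -> In s S) ->
  (forall y, In y (vars l) -> qv y = true -> In y (bnd b)) ->
  dy iskey kinv (kerT S A) l.
Proof.
  intros qv iskey kinv S A b l Hb. induction l; intros Hw Hp Hq.
  - destruct (has_qvar qv (Var n)) eqn:Hh.
    + apply dy_ax; unfold kerT; apply in_or_app; right; apply in_map.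
      apply in_flat_map; exists b; split; auto. apply Hq; simpl; auto.
      unfold has_qvar in Hh; simpl in Hh; rewrite orb_false_r in Hh; auto.
    + apply dy_ax; unfold kerT; apply in_or_app; left; apply Hp; rewrite pubs_nq; simpl; auto.
  - apply dy_ax; unfold kerT; apply in_or_app; left; apply Hp; simpl; auto.
  - destruct (has_qvar qv (Pair l1 l2)) eqn:Hh.
    + destruct Hw. simpl in Hp; rewrite Hh in Hp. apply dy_pair.
      * apply IHl1; auto; [intros; apply Hp; apply in_or_app; auto|intros; apply Hq; simpl; auto; apply in_or_app; auto].
      * apply IHl2; auto; [intros; apply Hp; apply in_or_app; auto|intros; apply Hq; simpl; auto; apply in_or_app; auto].
    + apply dy_ax; unfold kerT; apply in_or_app; left; apply Hp; rewrite pubs_nq; simpl; auto.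
  - destruct (has_qvar qv (Enc l1 l2)) eqn:Hh.
    + destruct Hw as [Hw Hk]. simpl in Hp; rewrite Hh in Hp. apply dy_enc; auto.
      * apply IHl1; auto; [intros; apply Hp; apply in_or_app; auto|intros; apply Hq; simpl; auto; apply in_or_app; auto].
      * apply IHl2; auto; [apply key_wf; auto|intros; apply Hp; apply in_or_app; auto|intros; apply Hq; simpl; auto; apply in_or_app; auto].
    + apply dy_ax; unfold kerT; apply in_or_app; left; apply Hp; rewrite pubs_nq; simpl; auto.
Qed.

Theorem theorem2
  (qv iskey : nat -> bool) (kinv : nat -> nat)
  (Hkeys : forall n, iskey n = true -> iskey (kinv n) = true /\ kinv (kinv n) = n)
  (S : list term) (A : list assertion) (alpha : assertion)
  (HwfS : forall s, In s S -> wf iskey s)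
  (HwfA : forall b, In b (alpha :: A) -> wf_assertion qv iskey b)
  (Hsan : sanitized qv S A)
  (Hcons : consistent iskey (kerE A))
  (Hdisj : forall x, In x (bnd alpha) ->
             ~ In x (flat_map vars S) /\ ~ In x (flat_map avars A))
  (mu : nat -> term)
  (Hmu : good_witness iskey kinv S A alpha mu) :
  exists nu : nat -> term,
    good_witness iskey kinv S A alpha nu /\
    (forall x, In x (bnd alpha) -> card (st (nu x)) <= bound_M S A alpha).
Proof.
  assert (Hcase : bnd alpha = [] \/ exists x0, In x0 (bnd alpha))
    by (destruct (bnd alpha); [left|right; exists n]; simpl; auto).
  destruct Hcase as [Hnil|[x0 Hx0']].
  { exists mu; split; [exact Hmu|]. intros x Hx; rewrite Hnil in Hx; destruct Hx. }
  set (T := kerT S A). set (E := kerE A). set (dom := bnd alpha).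
  set (tl := lhs alpha). set (tr := rhs alpha).
  set (Ulist := flat_map st S ++ flat_map sta (A ++ [alpha])).
  destruct Hcons as [lam [_ Hlam0]].
  pose proof Hmu as Hmu'.
  destruct Hmu' as [Hmuw [Hwml [Hwmr [Hmud [Habs Heq]]]]].
  destruct Hsan as [Hs1 [Hs2 Hs3]].
  assert (HUcl : forall s s', In s Ulist -> In s' (st s) -> In s' Ulist).
  { intros s s' Hs Hs'. apply in_app_or in Hs; apply in_or_app; destruct Hs as [Hs|Hs]; [left|right];
    apply in_flat_map in Hs; destruct Hs as [z [Hz Hsz]]; apply in_flat_map; exists z; split; auto.
    - eapply st_trans; eauto.
    - unfold sta in *; apply in_app_or in Hsz; apply in_or_app; destruct Hsz; [left|right]; eapply st_trans; eauto. }
  assert (HUwf : forall s, In s Ulist -> wf iskey s).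
  { intros s Hs. apply in_app_or in Hs; destruct Hs as [Hs|Hs];
    apply in_flat_map in Hs; destruct Hs as [z [Hz Hsz]].
    - apply (wf_st iskey z s (HwfS z Hz) Hsz).
    - assert (Hz' : In z (alpha :: A)).
      { apply in_app_or in Hz; destruct Hz as [Hz|[<-|[]]]; simpl; auto. }
      destruct (HwfA z Hz') as [_ [Wl [Wr _]]].
      unfold sta in Hsz; apply in_app_or in Hsz; destruct Hsz;
      [apply (wf_st iskey (lhs z) s Wl)|apply (wf_st iskey (rhs z) s Wr)]; auto. }
  assert (HEdy : forall b, In b A -> dy iskey kinv T (lhs b) /\ dy iskey kinv T (rhs b)).
  { intros b Hb. assert (Hbw : In b (alpha :: A)) by (simpl; auto).
    destruct (HwfA b Hbw) as [_ [Wl [Wr _]]].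
    assert (Hq : forall y, In y (vars (lhs b)) \/ In y (vars (rhs b)) -> qv y = true -> In y (bnd b)).
    { intros y Hy Hqy. destruct (in_dec Nat.eq_dec y (bnd b)) as [|Hn]; auto.
      exfalso. assert (Hf : In y (fva b)).
      { unfold fva; apply filter_In; split; [apply in_or_app; auto|].
        destruct (in_dec Nat.eq_dec y (bnd b)); [contradiction|reflexivity]. }
      pose proof (Hs2 b y Hb Hf). congruence. }
    split; eapply (E_term_dy qv); eauto.
    - intros s Hs; apply (Hs3 b s Hb); unfold pubs; apply in_or_app; auto.
    - intros s Hs; apply (Hs3 b s Hb); unfold pubs; apply in_or_app; auto. }
  assert (HAU : forall b s, In b A -> In s (st (lhs b)) \/ In s (st (rhs b)) -> In s Ulist).
  { intros b s Hb Hs. apply in_or_app; right. apply in_flat_map; exists b; split.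
    - apply in_or_app; auto.
    - unfold sta; apply in_or_app; auto. }
  assert (HE : forall a b, In (a,b) E -> In a Ulist /\ In b Ulist /\ dy iskey kinv T a /\ dy iskey kinv T b).
  { intros a c Hac. unfold E, kerE in Hac. apply in_map_iff in Hac; destruct Hac as [b [Hbe Hb]].
    injection Hbe; intros <- <-. destruct (HEdy b Hb).
    repeat split; auto; eapply HAU; eauto; [left|right]; apply st_refl. }
  assert (Hlam : forall a b, In (a,b) E -> Defs.app lam a = Defs.app lam b).
  { intros a b Hab; apply (Hlam0 a b Hab). }
  assert (HXU : forall s, In s T -> In s Ulist \/ (exists n, s = Var n) \/ (exists n, s = Nm n)).
  { intros s Hs. unfold T, kerT in Hs. apply in_app_or in Hs; destruct Hs as [Hs|Hs].
    - left; apply in_or_app; left; apply in_flat_map; exists s; split; auto; apply st_refl.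
    - right; left. apply in_map_iff in Hs; destruct Hs as [n [<- _]]; eauto. }
  assert (Hdisj' : forall y, In y dom -> ~ In y (flat_map vars T)).
  { intros y Hy Hin. destruct (Hdisj y Hy) as [D1 D2].
    apply in_flat_map in Hin; destruct Hin as [z [Hz Hyz]].
    unfold T, kerT in Hz; apply in_app_or in Hz; destruct Hz as [Hz|Hz].
    - apply D1; apply in_flat_map; eauto.
    - apply in_map_iff in Hz; destruct Hz as [w [<- Hw]]. simpl in Hyz; destruct Hyz as [<-|[]].
      apply in_flat_map in Hw; destruct Hw as [b [Hb Hyb]].
      apply D2; apply in_flat_map; exists b; split; auto; unfold avars; apply in_or_app; auto. }
  assert (HstU : forall s, In s (st tl) \/ In s (st tr) -> In s Ulist).
  { intros s Hs. apply in_or_app; right. apply in_flat_map; exists alpha; split.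
    - apply in_or_app; right; simpl; auto.
    - unfold sta; apply in_or_app; auto. }
  assert (Hx0 : In x0 dom) by exact Hx0'.
  assert (Hc0 : exists c0, In c0 (Blist iskey kinv T Ulist)).
  { destruct S as [|s0 S0] eqn:HS.
    - destruct A as [|b0 A0] eqn:HA.
      + exfalso. apply (dy_nil iskey kinv (mu x0)). apply Hmud. exact Hx0'.
      + exists (lhs b0). apply inB; split.
        * eapply HAU; [simpl; auto|left; apply st_refl].
        * apply HEdy; simpl; auto.
    - exists s0. apply inB; split.
      + apply in_or_app; left; simpl; apply in_or_app; left; apply st_refl.
      + apply dy_ax; unfold T, kerT; simpl; auto. }
  destruct Hc0 as [c0 Hc0].
  assert (Hwtl : wf iskey tl /\ wf iskey tr).
  { destruct (HwfA alpha) as [_ [Wl [Wr _]]]; simpl; auto. }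
  destruct Hwtl as [Wtl Wtr].
  destruct (eqd_constr _ _ _ _ _ HE _ _ Heq) as [Cl Cr].
  assert (HGl : Good iskey kinv T dom tl).
  { apply good_of; auto.
    - intros x p Hx Hp; apply (Habs x tl p Hx (or_introl eq_refl) Hp).
    - intros Hf. apply wf_constr_dy; auto. unfold tl, dom in *; rewrite <- (subst_domfree (bnd alpha) mu (lhs alpha) Hf); exact Cl. }
  assert (HGr : Good iskey kinv T dom tr).
  { apply good_of; auto.
    - intros x p Hx Hp; apply (Habs x tr p Hx (or_intror eq_refl) Hp).
    - intros Hf. apply wf_constr_dy; auto. unfold tr, dom in *; rewrite <- (subst_domfree (bnd alpha) mu (rhs alpha) Hf); exact Cr. }
  exists (nu iskey kinv T E Ulist lam dom mu tl tr c0).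
  split.
  - unfold good_witness. fold T E dom tl tr.
    split; [|split; [|split; [|split; [|split]]]].
    + intros x Hx; eapply nu_dy_wf; eauto.
    + apply (proj2 (Good_ns iskey kinv T E Ulist lam HUcl HUwf dom mu tl tr Hmud Hmuw HstU c0 Hc0 HGl HGr Hwml Hwmr tl HGl Hwml (or_introl (st_refl tl)))).
    + apply (proj2 (Good_ns iskey kinv T E Ulist lam HUcl HUwf dom mu tl tr Hmud Hmuw HstU c0 Hc0 HGl HGr Hwml Hwmr tr HGr Hwmr (or_intror (st_refl tr)))).
    + intros x Hx; eapply nu_dy_wf; eauto.
    + intros x r p Hx Hr Hp. exact (Habs x r p Hx Hr Hp).
    + apply (ns_eq iskey kinv T E Ulist lam HUcl HUwf HE Hlam HXU dom mu tl tr Hmud Hmuw HstU c0 Hc0 HGl HGr Hwml Hwmr Heq).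
  - intros x Hx. unfold bound_M. fold Ulist.
    eapply card_nu; eauto.
Qed.
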